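(* Let $s>1/2$. For $\tau\in\mathbb R$ let $\mathcal H_1(\tau)e_n=e^{-in^3\tau}e_n$, $n\in\mathbb Z$, and for $w\in H^s$ set $$\widetilde H(\tau,w):=\mathcal H_1(-\tau)\big(\mathcal H_1(\tau)w\cdot\partial_x\mathcal H_1(\tau)w\big).$$ Then $\widetilde H(\tau,\cdot)$ is well defined and smooth from $H^s$ to $H^{s-1}$ with $\|\widetilde H(\tau,w)\|_{H^{s-1}}\le C_s\|w\|_{H^s}^2$, $C_s$ independent of $\tau$. Moreover, $\widetilde H$ is $2\pi$-periodic in $\tau$ and its time average is $$K(w):=\frac1{2\pi}\int_0^{2\pi}\widetilde H(\tau,w)\,d\tau=w_0\,\partial_x w+ie_0\sum_{n\in\mathbb Z}nw_nw_{-n}=w_0\sum_{n\in\mathbb Z}inw_ne_n+\Big(\sum_{n\in\mathbb Z}inw_nw_{-n}\Big)e_0,$$ where $w_0=\frac1{2\pi}\int_{-\pi}^{\pi}w(x)\,dx$.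
   Context: $e_n(x)=e^{inx}$; $w=\sum_n w_ne_n$; $H^s$ is the space of complex-valued $2\pi$-periodic functions with $\|w\|_{H^s}^2=\sum_n(|n|^2+1)^s|w_n|^2<\infty$. *)

(* Defs.v *)
From Stdlib Require Import Reals ZArith.
From Coquelicot Require Import Coquelicot.
Open Scope R_scope.

(* A 2pi-periodic complex function w = sum_n w_n e_n is represented by its
   Fourier coefficient sequence n |-> w_n. *)
Definition seqZ := Z -> C.

Definition zpsum {G : AbelianGroup} (f : Z -> G) (N : nat) : G :=
  sum_n (fun j : nat => f (Z.of_nat j - Z.of_nat N)%Z) (2 * N).

Definition is_zsumC (f : Z -> C) (l : C) : Prop :=
  filterlim (zpsum f) eventually (locally l).

Definition zsumC (f : Z -> C) : C :=
  @lim C_CompleteNormedModule (filtermap (zpsum f) eventually).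

Definition Hs_wt (s : R) (w : seqZ) (k : Z) : R :=
  Rpower (IZR k ^ 2 + 1) s * (Cmod (w k)) ^ 2.
Definition in_H (s : R) (w : seqZ) : Prop :=
  ex_finite_lim_seq (zpsum (G := R_AbelianGroup) (Hs_wt s w)).
Definition Hnorm (s : R) (w : seqZ) : R :=
  sqrt (real (Lim_seq (zpsum (G := R_AbelianGroup) (Hs_wt s w)))).

Definition sadd (u v : seqZ) : seqZ := fun n => Cplus (u n) (v n).
Definition ssub (u v : seqZ) : seqZ := fun n => Cminus (u n) (v n).
Definition sscal (a : R) (u : seqZ) : seqZ := fun n => Cmult (RtoC a) (u n).

Definition cexpi (t : R) : C := (cos t, sin t).

Definition H1 (tau : R) (w : seqZ) : seqZ :=
  fun n => Cmult (cexpi (- (IZR n ^ 3) * tau)) (w n).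

Definition dx (w : seqZ) : seqZ := fun n => Cmult (Cmult Ci (RtoC (IZR n))) (w n).

(* product of two functions = convolution of coefficients:
   (u v)_n = sum_k u_k v_{n-k}. *)
Definition conv_at (u v : seqZ) (n : Z) : Z -> C := fun k => Cmult (u k) (v (n - k)%Z).
Definition conv (u v : seqZ) : seqZ := fun n => zsumC (conv_at u v n).

Definition Htilde (tau : R) (w : seqZ) : seqZ :=
  H1 (- tau) (conv (H1 tau w) (dx (H1 tau w))).

Fixpoint prodR (k : nat) (g : nat -> R) : R :=
  match k with O => 1 | S k' => prodR k' g * g k' end.
Definition upd (v : nat -> seqZ) (i : nat) (x : seqZ) : nat -> seqZ :=
  fun j => if Nat.eqb j i then x else v j.
Definition scons (h : seqZ) (v : nat -> seqZ) : nat -> seqZ :=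
  fun j => match j with O => h | S j' => v j' end.

(* f is smooth from H^s to H^t: there are maps D k w (k-th derivative at w,
   a bounded real k-linear map (H^s)^k -> H^t, applied to the first k entries
   of v) with D 0 = f, such that each D k is Frechet differentiable (in the
   operator norm of bounded k-linear maps) with derivative D (k+1). *)
Definition smooth_map (s t : R) (f : seqZ -> seqZ) : Prop :=
  exists D : nat -> seqZ -> (nat -> seqZ) -> seqZ,
    (forall w v, in_H s w -> D O w v = f w) /\
    forall (k : nat) (w : seqZ), in_H s w ->
      (forall v v', (forall i, (i < k)%nat -> v i = v' i) -> D k w v = D k w v') /\
      (forall v i (a b : R) x y, (i < k)%nat ->
         (forall j, (j < k)%nat -> in_H s (v j)) -> in_H s x -> in_H s y ->
         D k w (upd v i (sadd (sscal a x) (sscal b y)))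
         = sadd (sscal a (D k w (upd v i x))) (sscal b (D k w (upd v i y)))) /\
      (exists M : R, forall v, (forall j, (j < k)%nat -> in_H s (v j)) ->
         in_H t (D k w v) /\
         Hnorm t (D k w v) <= M * prodR k (fun j => Hnorm s (v j))) /\
      (forall eps : R, 0 < eps -> exists delta : R, 0 < delta /\
         forall h, in_H s h -> Hnorm s h < delta ->
         forall v, (forall j, (j < k)%nat -> in_H s (v j)) ->
         Hnorm t (ssub (ssub (D k (sadd w h) v) (D k w v)) (D (S k) w (scons h v)))
         <= eps * Hnorm s h * prodR k (fun j => Hnorm s (v j))).

(* Main.v *)
Require Import Defs.
From Stdlib Require Import Reals ZArith Lra Lia Psatz FunctionalExtensionality.
From Coquelicot Require Import Coquelicot.
Open Scope R_scope.

Fixpoint fsg {G : AbelianGroup} (f : Z -> G) (a : Z) (m : nat) : G :=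
  match m with O => zero | S m' => plus (f a) (fsg f (Z.succ a) m') end.

Lemma fsg_snoc {G : AbelianGroup} (f : Z -> G) m : forall a,
  fsg f a (S m) = plus (fsg f a m) (f (a + Z.of_nat m)%Z).
Proof.
  induction m as [|m IH]; intros a.
  - simpl. rewrite plus_zero_r, plus_zero_l. now rewrite Z.add_0_r.
  - change (fsg f a (S (S m))) with (plus (f a) (fsg f (Z.succ a) (S m))).
    rewrite IH. rewrite plus_assoc. simpl.
    replace (Z.succ a + Z.of_nat m)%Z with (a + Z.of_nat (S m))%Z by lia. reflexivity.
Qed.

Lemma zpsum_fsg {G : AbelianGroup} (f : Z -> G) N :
  zpsum f N = fsg f (- Z.of_nat N)%Z (S (2 * N)).
Proof.
  unfold zpsum. generalize (2 * N)%nat as m. induction m as [|m IH].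
  - rewrite sum_O. simpl. rewrite plus_zero_r. f_equal.
  - rewrite sum_Sn, IH, (fsg_snoc f (S m)).
    replace (- Z.of_nat N + Z.of_nat (S m))%Z with (Z.of_nat (S m) - Z.of_nat N)%Z by lia. reflexivity.
Qed.

Lemma fsg_split {G : AbelianGroup} (f : Z -> G) m1 : forall a m2,
  fsg f a (m1 + m2) = plus (fsg f a m1) (fsg f (a + Z.of_nat m1)%Z m2).
Proof.
  induction m1 as [|m1 IH]; intros a m2; simpl.
  - rewrite plus_zero_l. f_equal. lia.
  - rewrite IH, plus_assoc. f_equal. f_equal. lia.
Qed.

Lemma fsg_ext {G : AbelianGroup} (f g : Z -> G) m : forall a,
  (forall k, (a <= k < a + Z.of_nat m)%Z -> f k = g k) -> fsg f a m = fsg g a m.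
Proof.
  induction m as [|m IH]; intros a H; simpl; auto.
  rewrite H by lia. f_equal. apply IH. intros k Hk. apply H. lia.
Qed.

Lemma fsg_shift {G : AbelianGroup} (f : Z -> G) c m : forall a,
  fsg (fun k => f (k + c)%Z) a m = fsg f (a + c)%Z m.
Proof.
  induction m as [|m IH]; intros a; simpl; auto.
  rewrite IH. f_equal. f_equal. lia.
Qed.

Lemma fsg_plus {G : AbelianGroup} (f g : Z -> G) m : forall a,
  fsg (fun k => plus (f k) (g k)) a m = plus (fsg f a m) (fsg g a m).
Proof.
  induction m as [|m IH]; intros a; simpl.
  - now rewrite plus_zero_l.
  - rewrite IH. rewrite <- !plus_assoc. f_equal.
    rewrite (plus_comm (g a)), <- plus_assoc. f_equal. apply plus_comm.
Qed.

Lemma fsg_opp {G : AbelianGroup} (f : Z -> G) m : forall a,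
  fsg (fun k => opp (f k)) a m = opp (fsg f a m).
Proof.
  induction m as [|m IH]; intros a; simpl.
  - symmetry. apply opp_zero.
  - rewrite IH, opp_plus. auto.
Qed.

Lemma fsg_zero {G : AbelianGroup} m : forall a, fsg (fun _ : Z => (zero : G)) a m = zero.
Proof. induction m as [|m IH]; intros a; simpl; auto. rewrite IH. apply plus_zero_l. Qed.

Lemma fsg_swap {G : AbelianGroup} (F : Z -> Z -> G) m l : forall a c,
  fsg (fun n => fsg (F n) c l) a m = fsg (fun k => fsg (fun n => F n k) a m) c l.
Proof.
  induction m as [|m IH]; intros a c; simpl.
  - symmetry. apply fsg_zero.
  - rewrite IH. rewrite <- fsg_plus. auto.
Qed.

Definition fs (f : Z -> R) a m : R := @fsg R_AbelianGroup f a m.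

Lemma fs_S f a m : fs f a (S m) = f a + fs f (Z.succ a) m.
Proof. reflexivity. Qed.
Lemma fs_O f a : fs f a O = 0.
Proof. reflexivity. Qed.

Lemma fs_le (f g : Z -> R) m : forall a,
  (forall k, (a <= k < a + Z.of_nat m)%Z -> f k <= g k) -> fs f a m <= fs g a m.
Proof.
  induction m as [|m IH]; intros a H. rewrite !fs_O; lra.
  rewrite !fs_S. assert (f a <= g a) by (apply H; lia).
  assert (fs f (Z.succ a) m <= fs g (Z.succ a) m) by (apply IH; intros; apply H; lia). lra.
Qed.

Lemma fs_nonneg (f : Z -> R) m a : (forall k, 0 <= f k) -> 0 <= fs f a m.
Proof.
  intros H. revert a; induction m; intros a. rewrite fs_O; lra. rewrite fs_S. specialize (IHm (Z.succ a)). specialize (H a). lra.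
Qed.

Lemma fs_plus f g a m : fs (fun k => f k + g k) a m = fs f a m + fs g a m.
Proof. apply (fsg_plus (G := R_AbelianGroup)). Qed.

Lemma fs_scal c f m : forall a, fs (fun k => c * f k) a m = c * fs f a m.
Proof. induction m as [|m IH]; intros a. rewrite !fs_O; lra. rewrite !fs_S, IH. lra. Qed.

Lemma fs_split f a m1 m2 : fs f a (m1 + m2) = fs f a m1 + fs f (a + Z.of_nat m1)%Z m2.
Proof. apply (fsg_split (G := R_AbelianGroup)). Qed.

Lemma fs_swap (F : Z -> Z -> R) m l a c :
  fs (fun n => fs (F n) c l) a m = fs (fun k => fs (fun n => F n k) a m) c l.
Proof. apply (fsg_swap (G := R_AbelianGroup)). Qed.

Lemma fs_ext f g m a : (forall k, (a <= k < a + Z.of_nat m)%Z -> f k = g k) -> fs f a m = fs g a m.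
Proof. apply (fsg_ext (G := R_AbelianGroup)). Qed.

Lemma fs_shift f c m a : fs (fun k => f (k + c)%Z) a m = fs f (a + c)%Z m.
Proof. apply (fsg_shift (G := R_AbelianGroup)). Qed.

Lemma fs_sub (f : Z -> R) (Hf : forall k, 0 <= f k) a m c l :
  (a <= c)%Z -> (c + Z.of_nat l <= a + Z.of_nat m)%Z -> fs f c l <= fs f a m.
Proof.
  intros H1 H2.
  assert (Hm : m = (Z.to_nat (c - a) + (l + Z.to_nat (a + Z.of_nat m - c - Z.of_nat l)))%nat) by lia.
  rewrite Hm, !fs_split.
  replace (a + Z.of_nat (Z.to_nat (c - a)))%Z with c by lia.
  pose proof (fs_nonneg f (Z.to_nat (c - a)) a Hf).
  pose proof (fs_nonneg f (Z.to_nat (a + Z.of_nat m - c - Z.of_nat l)) (c + Z.of_nat l) Hf). lra.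
Qed.

Lemma qxx_nonneg q x : 0 <= q -> 0 <= q * x * x.
Proof. intros H. rewrite Rmult_assoc. apply Rmult_le_pos; auto. apply Rle_0_sqr. Qed.

Lemma quad_disc (al be ga : R) : (forall t, 0 <= al * t * t + 2 * be * t + ga) -> 0 <= al -> be * be <= al * ga.
Proof.
  intros H Hal. destruct (Req_dec al 0) as [E|E].
  - subst. destruct (Req_dec be 0) as [Eb|Eb]. subst; lra.
    specialize (H (- (ga + 1) / (2 * be))). exfalso.
    replace (0 * (- (ga + 1) / (2 * be)) * (- (ga + 1) / (2 * be)) + 2 * be * (- (ga + 1) / (2 * be)) + ga) with (-1) in H by (field; auto). lra.
  - specialize (H (- be / al)).
    assert (0 < al) by lra.
    replace (al * (- be / al) * (- be / al) + 2 * be * (- be / al) + ga) with ((al * ga - be * be) / al) in H by (field; auto).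
    assert (0 <= al * ga - be * be). { apply Rmult_le_reg_r with (/ al). apply Rinv_0_lt_compat; lra. rewrite Rmult_0_l. exact H. }
    lra.
Qed.

Lemma fs_CS (p q : Z -> R) m a : (forall k, 0 <= q k) ->
  fs (fun k => q k * p k) a m * fs (fun k => q k * p k) a m <=
  fs (fun k => q k * p k * p k) a m * fs q a m.
Proof.
  intros Hq. apply quad_disc.
  - intros t.
    pose proof (fs_nonneg (fun k => q k * (p k * t + 1) * (p k * t + 1)) m a) as H.
    assert (H' : 0 <= fs (fun k => q k * (p k * t + 1) * (p k * t + 1)) a m).
    { apply H. intros k. apply qxx_nonneg; auto. }
    replace (fs (fun k => q k * (p k * t + 1) * (p k * t + 1)) a m) with
      (fs (fun k => q k * p k * p k) a m * t * t + 2 * fs (fun k => q k * p k) a m * t + fs q a m) in H'.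
    exact H'.
    transitivity (fs (fun k => (t*t) * (q k * p k * p k) + (2*t) * (q k * p k) + q k) a m).
    { rewrite !fs_plus, !fs_scal. ring. }
    apply fs_ext; intros; ring.
  - apply fs_nonneg. intros k. apply qxx_nonneg; auto.
Qed.

Lemma ball_C_Cmod (x y : C) (eps : R) : ball x eps y -> Cmod (Cminus y x) < 2 * eps.
Proof.
  intros [H1 H2]. unfold ball in H1, H2; simpl in H1, H2. unfold AbsRing_ball in H1, H2.
  unfold abs, minus, plus, opp in H1, H2; simpl in H1, H2.
  pose proof (Cmod_2Rmax (Cminus y x)) as H.
  assert (Rmax (Rabs (fst (Cminus y x))) (Rabs (snd (Cminus y x))) < eps).
  { apply Rmax_lub_lt; simpl; unfold Rminus; auto. }
  assert (sqrt 2 < 2).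
  { rewrite <- (sqrt_square 2) at 2 by lra. apply sqrt_lt_1; lra. }
  assert (0 <= Rmax (Rabs (fst (Cminus y x))) (Rabs (snd (Cminus y x)))).
  { apply Rle_trans with (Rabs (fst (Cminus y x))). apply Rabs_pos. apply Rmax_l. }
  assert (0 <= sqrt 2) by apply sqrt_pos.
  nra.
Qed.

Lemma Cmod_ball_C (x y : C) (eps : R) : Cmod (Cminus y x) < eps -> ball x eps y.
Proof.
  intros H. pose proof (Rmax_Cmod (Cminus y x)) as H'.
  split; unfold ball; simpl; unfold AbsRing_ball, abs, minus, plus, opp; simpl.
  - apply Rle_lt_trans with (2 := H). eapply Rle_trans; [|exact H']. apply Rmax_l.
  - apply Rle_lt_trans with (2 := H). eapply Rle_trans; [|exact H']. apply Rmax_r.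
Qed.

Lemma is_zsumC_iff (f : Z -> C) l : is_zsumC f l <->
  (forall eps, 0 < eps -> exists N0, forall N, (N0 <= N)%nat -> Cmod (Cminus (zpsum f N) l) < eps).
Proof.
  split.
  - intros H eps Heps.
    assert (Hl : locally l (ball l (eps / 2))).
    { exists (mkposreal _ (ltac:(lra) : 0 < eps / 2)). auto. }
    destruct (H _ Hl) as [N0 HN0]. exists N0. intros N HN.
    specialize (HN0 N HN). apply ball_C_Cmod in HN0. lra.
  - intros H P [e He]. destruct (H e (cond_pos e)) as [N0 HN0].
    exists N0. intros N HN. apply He. apply Cmod_ball_C. auto.
Qed.

Lemma zsumC_eq (f : Z -> C) l : is_zsumC f l -> zsumC f = l.
Proof.
  intros H. unfold zsumC.
  set (F := filtermap (zpsum f) eventually).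
  assert (HF : ProperFilter F).
  { apply filtermap_proper_filter. apply eventually_filter. }
  assert (Hc : cauchy F).
  { intros eps. exists l. apply H. exists eps. auto. }
  pose proof (@complete_cauchy C_CompleteNormedModule F HF Hc) as Hlim.
  set (L := @lim C_CompleteNormedModule F) in *.
  pose proof (proj1 (is_zsumC_iff f l) H) as H'. clear H. rename H' into H.
  destruct (Req_dec (Cmod (Cminus L l)) 0) as [E|E].
  - apply Cmod_eq_0 in E. apply injective_projections; simpl;
    [apply (f_equal fst) in E | apply (f_equal snd) in E]; simpl in E; lra.
  - exfalso. set (d := Cmod (Cminus L l)).
    assert (Hd : 0 < d) by (pose proof (Cmod_ge_0 (Cminus L l)); unfold d in *; lra).
    destruct (H (d / 4)) as [N0 HN0]; [lra|].
    destruct (Hlim (mkposreal (d/8) ltac:(lra))) as [N1 HN1].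
    set (N := max N0 N1). specialize (HN0 N (Nat.le_max_l _ _)). specialize (HN1 N (Nat.le_max_r _ _)).
    simpl in HN1. apply ball_C_Cmod in HN1.
    assert (Cminus L l = Cplus (Copp (Cminus (zpsum f N) L)) (Cminus (zpsum f N) l)).
    { apply injective_projections; simpl; ring. }
    assert (d <= Cmod (Cminus (zpsum f N) L) + Cmod (Cminus (zpsum f N) l)).
    { unfold d. rewrite H0. eapply Rle_trans. apply Cmod_triangle.
      rewrite Cmod_opp. lra. }
    lra.
Qed.

Definition zps (f : Z -> R) (N : nat) : R := zpsum (G := R_AbelianGroup) f N.

Lemma zps_fs f N : zps f N = fs f (- Z.of_nat N)%Z (S (2 * N)).
Proof. apply (zpsum_fsg (G := R_AbelianGroup)). Qed.

Definition nng (f : Z -> R) := forall k, 0 <= f k.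
Definition Zb (f : Z -> R) (M : R) := forall N, zps f N <= M.

Lemma zps_mono f (Hf : nng f) N N' : (N <= N')%nat -> zps f N <= zps f N'.
Proof.
  intros H. rewrite !zps_fs. apply fs_sub; auto; lia.
Qed.

Lemma Zb_window f M (Hf : nng f) : Zb f M -> forall c l, fs f c l <= M.
Proof.
  intros H c l. eapply Rle_trans; [|apply (H (Z.to_nat (Z.abs c) + l)%nat)].
  rewrite zps_fs. apply fs_sub; auto; lia.
Qed.

Definition zlim (f : Z -> R) : R := real (Lim_seq (zps f)).

Lemma zlim_correct f M (Hf : nng f) : Zb f M -> is_lim_seq (zps f) (zlim f).
Proof.
  intros H.
  assert (E : ex_finite_lim_seq (zps f)).
  { apply ex_finite_lim_seq_incr with M; auto. intros n. apply zps_mono; auto. }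
  destruct E as [l Hl]. unfold zlim. rewrite (is_lim_seq_unique _ _ Hl). exact Hl.
Qed.

Lemma zps_le_zlim f M (Hf : nng f) : Zb f M -> forall N, zps f N <= zlim f.
Proof.
  intros H N. apply is_lim_seq_incr_compare. apply (zlim_correct f M); auto.
  intros n; apply zps_mono; auto.
Qed.

Lemma zlim_le f M (Hf : nng f) : Zb f M -> zlim f <= M.
Proof.
  intros H. pose proof (zlim_correct f M Hf H) as Hl.
  assert (Rbar_le (zlim f) M).
  { apply (is_lim_seq_le _ _ _ _ H Hl (is_lim_seq_const M)). }
  simpl in H0. auto.
Qed.

Lemma zlim_nonneg f M (Hf : nng f) : Zb f M -> 0 <= zlim f.
Proof.
  intros H. eapply Rle_trans; [|apply (zps_le_zlim f M Hf H 0)]. rewrite zps_fs. apply fs_nonneg; auto.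
Qed.

Lemma zlim_tail f M (Hf : nng f) : Zb f M ->
  forall eps, 0 < eps -> exists N0, forall N, (N0 <= N)%nat -> zlim f - zps f N < eps.
Proof.
  intros H eps Heps. pose proof (zlim_correct f M Hf H) as Hl.
  apply is_lim_seq_spec in Hl. destruct (Hl (mkposreal eps Heps)) as [N0 HN0].
  exists N0. intros N HN. specialize (HN0 N HN). simpl in HN0.
  apply Rabs_def2 in HN0. lra.
Qed.

Definition fsC (f : Z -> C) a m : C := @fsg C_AbelianGroup f a m.

Lemma zpsumC_fs (f : Z -> C) N : zpsum f N = fsC f (- Z.of_nat N)%Z (S (2 * N)).
Proof. apply (zpsum_fsg (G := C_AbelianGroup)). Qed.

Lemma fsC_S f a m : fsC f a (S m) = Cplus (f a) (fsC f (Z.succ a) m).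
Proof. reflexivity. Qed.

Lemma fsC_Cmod (f : Z -> C) m : forall a, Cmod (fsC f a m) <= fs (fun k => Cmod (f k)) a m.
Proof.
  induction m as [|m IH]; intros a.
  - unfold fsC, fs; simpl. unfold zero; simpl. unfold Cmod. simpl. rewrite !Rmult_0_l, Rplus_0_l, sqrt_0. apply Rle_refl.
  - rewrite fsC_S, fs_S. eapply Rle_trans. apply Cmod_triangle. specialize (IH (Z.succ a)). lra.
Qed.

Lemma fsC_le (f : Z -> C) (d : Z -> R) m a :
  (forall k, Cmod (f k) <= d k) -> Cmod (fsC f a m) <= fs d a m.
Proof.
  intros H. eapply Rle_trans. apply fsC_Cmod. apply fs_le. intros; auto.
Qed.

Lemma fsC_split f a m1 m2 : fsC f a (m1 + m2) = Cplus (fsC f a m1) (fsC f (a + Z.of_nat m1)%Z m2).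
Proof. apply (fsg_split (G := C_AbelianGroup)). Qed.

Lemma fsC_window (f : Z -> C) (d : Z -> R) (Hd : forall k, Cmod (f k) <= d k) a m c l :
  (a <= c)%Z -> (c + Z.of_nat l <= a + Z.of_nat m)%Z ->
  Cmod (Cminus (fsC f a m) (fsC f c l)) <= fs d a m - fs d c l.
Proof.
  intros H1 H2.
  assert (Hm : m = (Z.to_nat (c - a) + (l + Z.to_nat (a + Z.of_nat m - c - Z.of_nat l)))%nat) by lia.
  rewrite Hm, fsC_split, fsC_split, fs_split, fs_split.
  replace (a + Z.of_nat (Z.to_nat (c - a)))%Z with c by lia.
  set (A := fsC f a (Z.to_nat (c - a))). set (B := fsC f (c + Z.of_nat l)%Z (Z.to_nat (a + Z.of_nat m - c - Z.of_nat l))).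
  replace (Cminus (Cplus A (Cplus (fsC f c l) B)) (fsC f c l)) with (Cplus A B)
    by (apply injective_projections; simpl; ring).
  eapply Rle_trans. apply Cmod_triangle.
  pose proof (fsC_le f d (Z.to_nat (c - a)) a Hd).
  pose proof (fsC_le f d (Z.to_nat (a + Z.of_nat m - c - Z.of_nat l)) (c + Z.of_nat l) Hd).
  unfold A, B. lra.
Qed.

Lemma dom_conv (f : Z -> C) (d : Z -> R) M :
  (forall k, Cmod (f k) <= d k) -> Zb d M -> exists l, is_zsumC f l.
Proof.
  intros Hd HM.
  assert (Hd0 : nng d) by (intros k; eapply Rle_trans; [apply Cmod_ge_0|apply Hd]).
  apply (proj1 (@filterlim_locally_cauchy nat C_CompleteNormedModule eventually _ (zpsum f))).
  intros eps.
  destruct (zlim_tail d M Hd0 HM (eps / 2)) as [N0 HN0]. { destruct eps; simpl; lra. }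
  exists (fun N => (N0 <= N)%nat). split. { exists N0. auto. }
  assert (Hw : forall u, (N0 <= u)%nat -> Cmod (Cminus (zpsum f u) (zpsum f N0)) < eps / 2).
  { intros u Hu. rewrite !zpsumC_fs.
    eapply Rle_lt_trans. apply fsC_window with (d := d); auto; lia.
    rewrite <- !zps_fs. specialize (HN0 N0 (le_n _)).
    pose proof (zps_le_zlim d M Hd0 HM u). lra. }
  intros u v Hu Hv. apply Cmod_ball_C.
  pose proof (Hw u Hu). pose proof (Hw v Hv).
  replace (Cminus (zpsum f v) (zpsum f u)) with
    (Cplus (Cminus (zpsum f v) (zpsum f N0)) (Copp (Cminus (zpsum f u) (zpsum f N0))))
    by (apply injective_projections; simpl; ring).
  eapply Rle_lt_trans. apply Cmod_triangle. rewrite Cmod_opp. lra.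
Qed.

Lemma dom_tail (f : Z -> C) (d : Z -> R) M l :
  (forall k, Cmod (f k) <= d k) -> Zb d M -> is_zsumC f l ->
  forall N, Cmod (Cminus l (zpsum f N)) <= zlim d - zps d N.
Proof.
  intros Hd HM Hl N.
  assert (Hd0 : nng d) by (intros k; eapply Rle_trans; [apply Cmod_ge_0|apply Hd]).
  apply Rnot_lt_le. intros Hlt.
  set (g := Cmod (Cminus l (zpsum f N)) - (zlim d - zps d N)).
  assert (Hg : 0 < g) by (unfold g; lra).
  destruct (proj1 (is_zsumC_iff f l) Hl g Hg) as [N0 HN0].
  set (N' := max N0 N). specialize (HN0 N' (Nat.le_max_l _ _)).
  assert (H1 : Cmod (Cminus (zpsum f N') (zpsum f N)) <= zlim d - zps d N).
  { rewrite !zpsumC_fs. eapply Rle_trans. apply fsC_window with (d := d); auto.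
    1,2: unfold N'; lia.
    rewrite <- !zps_fs. pose proof (zps_le_zlim d M Hd0 HM N'). lra. }
  assert (E : Cminus l (zpsum f N) = Cplus (Copp (Cminus (zpsum f N') l)) (Cminus (zpsum f N') (zpsum f N)))
    by (apply injective_projections; simpl; ring).
  assert (Cmod (Cminus l (zpsum f N)) <=
          Cmod (Cminus (zpsum f N') l) + Cmod (Cminus (zpsum f N') (zpsum f N))).
  { rewrite E. eapply Rle_trans. apply Cmod_triangle. rewrite Cmod_opp. lra. }
  unfold g in HN0. lra.
Qed.

Lemma dom_bound (f : Z -> C) (d : Z -> R) M l :
  (forall k, Cmod (f k) <= d k) -> Zb d M -> is_zsumC f l -> Cmod l <= zlim d.
Proof.
  intros Hd HM Hl. pose proof (dom_tail f d M l Hd HM Hl 0).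
  assert (Cmod (zpsum f 0) <= zps d 0).
  { rewrite zpsumC_fs, zps_fs. apply fsC_le; auto. }
  replace l with (Cplus (Cminus l (zpsum f 0)) (zpsum f 0)) by (apply injective_projections; simpl; ring).
  eapply Rle_trans. apply Cmod_triangle. lra.
Qed.

Lemma fsg_refl {G : AbelianGroup} (f : Z -> G) c m : forall a,
  fsg (fun k => f (c - k)%Z) a m = fsg f (c - a - Z.of_nat m + 1)%Z m.
Proof.
  induction m as [|m IH]; intros a.
  - reflexivity.
  - change (fsg (fun k => f (c - k)%Z) a (S m)) with (plus (f (c - a)%Z) (fsg (fun k => f (c - k)%Z) (Z.succ a) m)).
    rewrite IH, fsg_snoc, plus_comm. 
    replace (c - Z.succ a - Z.of_nat m + 1)%Z with (c - a - Z.of_nat (S m) + 1)%Z by lia.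
    replace (c - a - Z.of_nat (S m) + 1 + Z.of_nat m)%Z with (c - a)%Z by lia. reflexivity.
Qed.

Lemma fs_le_zlim f M (Hf : nng f) : Zb f M -> forall c l, fs f c l <= zlim f.
Proof.
  intros H c l. eapply Rle_trans; [|apply (zps_le_zlim f M Hf H (Z.to_nat (Z.abs c) + l)%nat)].
  rewrite zps_fs. apply fs_sub; auto; lia.
Qed.

Lemma Zb_refl f M (Hf : nng f) n : Zb f M -> Zb (fun k => f (n - k)%Z) M.
Proof.
  intros H N. unfold zps. rewrite (zpsum_fsg (G := R_AbelianGroup)).
  rewrite fsg_refl. apply (Zb_window f M Hf H).
Qed.

Lemma nonneg_refl f n : nng f -> nng (fun k => f (n - k)%Z).
Proof. intros H k. apply H. Qed.

Lemma zpsum_Cplus (f g : Z -> C) N : zpsum (fun k => Cplus (f k) (g k)) N = Cplus (zpsum f N) (zpsum g N).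
Proof. unfold zpsum. apply (sum_n_plus (G := C_AbelianGroup)). Qed.

Lemma zpsum_Cmult (c : C) (f : Z -> C) N : zpsum (fun k => Cmult c (f k)) N = Cmult c (zpsum f N).
Proof. unfold zpsum. apply (sum_n_mult_l (K := C_Ring)). Qed.

Lemma is_zsumC_plus f g l1 l2 : is_zsumC f l1 -> is_zsumC g l2 ->
  is_zsumC (fun k => Cplus (f k) (g k)) (Cplus l1 l2).
Proof.
  intros H1 H2. apply is_zsumC_iff. intros eps Heps.
  destruct (proj1 (is_zsumC_iff _ _) H1 (eps/2)) as [N1 HN1]; [lra|].
  destruct (proj1 (is_zsumC_iff _ _) H2 (eps/2)) as [N2 HN2]; [lra|].
  exists (max N1 N2). intros N HN.
  rewrite zpsum_Cplus.
  specialize (HN1 N ltac:(lia)). specialize (HN2 N ltac:(lia)).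
  replace (Cminus (Cplus (zpsum f N) (zpsum g N)) (Cplus l1 l2)) with
    (Cplus (Cminus (zpsum f N) l1) (Cminus (zpsum g N) l2)) by (apply injective_projections; simpl; ring).
  eapply Rle_lt_trans. apply Cmod_triangle. lra.
Qed.

Lemma is_zsumC_scal c f l : is_zsumC f l -> is_zsumC (fun k => Cmult c (f k)) (Cmult c l).
Proof.
  intros H1. apply is_zsumC_iff. intros eps Heps.
  assert (Hc : 0 < Cmod c + 1) by (pose proof (Cmod_ge_0 c); lra).
  destruct (proj1 (is_zsumC_iff _ _) H1 (eps / (Cmod c + 1))) as [N1 HN1].
  { apply Rdiv_lt_0_compat; lra. }
  exists N1. intros N HN. rewrite zpsum_Cmult.
  replace (Cminus (Cmult c (zpsum f N)) (Cmult c l)) with (Cmult c (Cminus (zpsum f N) l))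
    by (apply injective_projections; simpl; ring).
  rewrite Cmod_mult. specialize (HN1 N HN).
  pose proof (Cmod_ge_0 c). pose proof (Cmod_ge_0 (Cminus (zpsum f N) l)).
  apply Rle_lt_trans with ((Cmod c + 1) * Cmod (Cminus (zpsum f N) l)). nra.
  apply Rmult_lt_reg_r with (/ (Cmod c + 1)). apply Rinv_0_lt_compat; lra.
  replace ((Cmod c + 1) * Cmod (Cminus (zpsum f N) l) * / (Cmod c + 1)) with (Cmod (Cminus (zpsum f N) l)) by (field; lra).
  exact HN1.
Qed.

Lemma is_zsumC_refl (f : Z -> C) (d : Z -> R) M l n :
  (forall k, Cmod (f k) <= d k) -> Zb d M -> is_zsumC f l -> is_zsumC (fun k => f (n - k)%Z) l.
Proof.
  intros Hd HM Hl. assert (Hd0 : nng d) by (intros k; eapply Rle_trans; [apply Cmod_ge_0|apply Hd]).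
  apply is_zsumC_iff. intros eps Heps.
  destruct (zlim_tail d M Hd0 HM (eps / 2)) as [N0 HN0]; [lra|].
  exists (N0 + Z.to_nat (Z.abs n))%nat. intros N HN.
  rewrite zpsumC_fs. unfold fsC. rewrite fsg_refl. change (@fsg C_AbelianGroup f ?a ?m) with (fsC f a m).
  set (W := fsC f (n - - Z.of_nat N - Z.of_nat (S (2 * N)) + 1)%Z (S (2 * N))).
  pose proof (dom_tail f d M l Hd HM Hl N0) as T. specialize (HN0 N0 (le_n _)).
  assert (H1 : Cmod (Cminus W (zpsum f N0)) <= zlim d - zps d N0).
  { rewrite zpsumC_fs. unfold W. eapply Rle_trans. apply fsC_window with (d := d); auto; lia.
    rewrite <- zps_fs. pose proof (fs_le_zlim d M Hd0 HM (n - - Z.of_nat N - Z.of_nat (S (2 * N)) + 1)%Z (S (2 * N))). lra. }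
  replace (Cminus W l) with (Cplus (Cminus W (zpsum f N0)) (Copp (Cminus l (zpsum f N0))))
    by (apply injective_projections; simpl; ring).
  eapply Rle_lt_trans. apply Cmod_triangle. rewrite Cmod_opp. lra.
Qed.

Lemma fs_CSw (w p q : Z -> R) m a : (forall k, 0 <= w k) ->
  fs (fun k => w k * p k * q k) a m * fs (fun k => w k * p k * q k) a m <=
  fs (fun k => w k * p k * p k) a m * fs (fun k => w k * q k * q k) a m.
Proof.
  intros Hw. apply quad_disc.
  - intros t.
    assert (H' : 0 <= fs (fun k => w k * (p k * t + q k) * (p k * t + q k)) a m).
    { apply fs_nonneg. intros k. apply qxx_nonneg; auto. }
    assert (E : fs (fun k => w k * (p k * t + q k) * (p k * t + q k)) a m =
      fs (fun k => w k * p k * p k) a m * t * t + 2 * fs (fun k => w k * p k * q k) a m * t + fs (fun k => w k * q k * q k) a m).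
    { transitivity (fs (fun k => (t*t) * (w k * p k * p k) + (2*t) * (w k * p k * q k) + w k * q k * q k) a m).
      apply fs_ext; intros; ring. rewrite !fs_plus, !fs_scal. ring. }
    rewrite <- E. exact H'.
  - apply fs_nonneg. intros k. apply qxx_nonneg; auto.
Qed.

Definition om (s : R) (k : Z) : R := Rpower (IZR k ^ 2 + 1) s.

Lemma base_pos (k : Z) : 1 <= IZR k ^ 2 + 1.
Proof. pose proof (pow2_ge_0 (IZR k)). lra. Qed.

Lemma om_pos s k : 0 < om s k.
Proof. unfold om, Rpower. apply exp_pos. Qed.

Lemma om_ge1 s k : 0 <= s -> 1 <= om s k.
Proof.
  intros Hs. unfold om. rewrite <- (Rpower_O (IZR k ^ 2 + 1)) at 1 by (pose proof (base_pos k); lra).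
  apply Rle_Rpower; auto. apply base_pos.
Qed.

Lemma hw_eq s w k : Hs_wt s w k = om s k * Cmod (w k) ^ 2.
Proof. reflexivity. Qed.

Lemma hw_nng s w : nng (Hs_wt s w).
Proof. intros k. rewrite hw_eq. apply Rmult_le_pos. left; apply om_pos. apply pow2_ge_0. Qed.

Lemma inH_Zb s w : in_H s w -> Zb (Hs_wt s w) (zlim (Hs_wt s w)).
Proof.
  intros [l Hl] N. unfold zlim.
  assert (E : Lim_seq (zps (Hs_wt s w)) = l) by (apply is_lim_seq_unique; exact Hl).
  rewrite E. simpl.
  apply is_lim_seq_incr_compare; auto. intros n. apply zps_mono. apply hw_nng. lia.
Qed.

Lemma Hnorm_sq s w : in_H s w -> Hnorm s w ^ 2 = zlim (Hs_wt s w).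
Proof.
  intros H. unfold Hnorm. rewrite pow2_sqrt; auto.
  apply (zlim_nonneg _ _ (hw_nng s w) (inH_Zb s w H)).
Qed.

Lemma Hnorm_nng s w : 0 <= Hnorm s w.
Proof. apply sqrt_pos. Qed.

Lemma Zb_inH t x K : 0 <= K -> Zb (Hs_wt t x) (K * K) -> in_H t x /\ Hnorm t x <= K.
Proof.
  intros HK H. split.
  - apply ex_finite_lim_seq_incr with (K * K); auto. intros n. apply zps_mono. apply hw_nng. lia.
  - unfold Hnorm. rewrite <- (sqrt_square K) by auto. apply sqrt_le_1_alt.
    apply (zlim_le _ _ (hw_nng t x) H).
Qed.

Lemma zps_le_Hnorm s w N : in_H s w -> zps (Hs_wt s w) N <= Hnorm s w ^ 2.
Proof. intros H. rewrite Hnorm_sq; auto. apply (zps_le_zlim _ _ (hw_nng s w) (inH_Zb s w H)). Qed.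

Lemma fs_le_Hnorm s w c l : in_H s w -> fs (Hs_wt s w) c l <= Hnorm s w ^ 2.
Proof. intros H. rewrite Hnorm_sq; auto. apply (fs_le_zlim _ _ (hw_nng s w) (inH_Zb s w H)). Qed.

Lemma Zb_Hnorm s w : in_H s w -> Zb (Hs_wt s w) (Hnorm s w ^ 2).
Proof. intros H N. apply zps_le_Hnorm; auto. Qed.

Lemma Cmod_sq_le_hw s w k : 0 <= s -> Cmod (w k) ^ 2 <= Hs_wt s w k.
Proof.
  intros Hs. rewrite hw_eq. pose proof (om_ge1 s k Hs). pose proof (pow2_ge_0 (Cmod (w k))). nra.
Qed.

Lemma sqrt_prod_bound P X Y : 0 <= P -> 0 <= X -> 0 <= Y -> P * P <= X * Y -> P <= sqrt X * sqrt Y.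
Proof.
  intros HP HX HY H. rewrite <- sqrt_mult by auto. rewrite <- (sqrt_square P) by auto.
  apply sqrt_le_1_alt. auto.
Qed.

Lemma inH_add t x y : in_H t x -> in_H t y ->
  in_H t (sadd x y) /\ Hnorm t (sadd x y) <= Hnorm t x + Hnorm t y.
Proof.
  intros Hx Hy. apply Zb_inH. pose proof (Hnorm_nng t x); pose proof (Hnorm_nng t y); lra.
  intros N. rewrite !zps_fs.
  set (a := (- Z.of_nat N)%Z). set (m := S (2 * N)).
  set (X := fs (Hs_wt t x) a m). set (Y := fs (Hs_wt t y) a m).
  set (P := fs (fun k => om t k * Cmod (x k) * Cmod (y k)) a m).
  assert (HX : X <= Hnorm t x ^ 2) by apply fs_le_Hnorm, Hx.
  assert (HY : Y <= Hnorm t y ^ 2) by apply fs_le_Hnorm, Hy.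
  assert (X0 : 0 <= X) by (apply fs_nonneg, hw_nng).
  assert (Y0 : 0 <= Y) by (apply fs_nonneg, hw_nng).
  assert (P0 : 0 <= P).
  { apply fs_nonneg. intros k. pose proof (om_pos t k). pose proof (Cmod_ge_0 (x k)). pose proof (Cmod_ge_0 (y k)).
    apply Rmult_le_pos; [apply Rmult_le_pos|]; lra. }
  assert (HP : P * P <= X * Y).
  { unfold P, X, Y. eapply Rle_trans. apply fs_CSw. intros k; left; apply om_pos.
    right. f_equal; apply fs_ext; intros; rewrite hw_eq; ring. }
  assert (HP2 : P <= sqrt X * sqrt Y) by (apply sqrt_prod_bound; auto).
  assert (sqrt X <= Hnorm t x).
  { rewrite <- (sqrt_pow2 (Hnorm t x)) by apply Hnorm_nng. apply sqrt_le_1_alt; auto. }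
  assert (sqrt Y <= Hnorm t y).
  { rewrite <- (sqrt_pow2 (Hnorm t y)) by apply Hnorm_nng. apply sqrt_le_1_alt; auto. }
  assert (E : fs (Hs_wt t (sadd x y)) a m <= X + 2 * P + Y).
  { unfold X, Y, P. rewrite <- fs_scal, <- !fs_plus. apply fs_le. intros k _.
    rewrite !hw_eq. unfold sadd. pose proof (Cmod_triangle (x k) (y k)).
    pose proof (Cmod_ge_0 (Cplus (x k) (y k))). pose proof (om_pos t k).
    assert (Cmod (Cplus (x k) (y k)) ^ 2 <= (Cmod (x k) + Cmod (y k)) ^ 2).
    { apply pow_incr. lra. }
    apply Rle_trans with (om t k * (Cmod (x k) + Cmod (y k)) ^ 2). apply Rmult_le_compat_l; lra.
    right. ring. }
  pose proof (sqrt_pos X). pose proof (sqrt_pos Y).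
  assert (X = sqrt X * sqrt X) by (rewrite sqrt_sqrt; auto).
  assert (Y = sqrt Y * sqrt Y) by (rewrite sqrt_sqrt; auto).
  pose proof (Hnorm_nng t x). pose proof (Hnorm_nng t y). nra.
Qed.

Lemma hw_scal t a x k : Hs_wt t (sscal a x) k = a * a * Hs_wt t x k.
Proof.
  rewrite !hw_eq. unfold sscal. rewrite Cmod_mult, Cmod_R. 
  replace (Rabs a * Cmod (x k)) with (Rabs a * Cmod (x k)) by reflexivity.
  rewrite Rpow_mult_distr. replace (Rabs a ^ 2) with (Rsqr (Rabs a)) by (unfold Rsqr; ring).
  rewrite <- Rsqr_abs. unfold Rsqr. ring.
Qed.

Lemma inH_scal t a x : in_H t x -> in_H t (sscal a x) /\ Hnorm t (sscal a x) <= Rabs a * Hnorm t x.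
Proof.
  intros Hx. apply Zb_inH. apply Rmult_le_pos. apply Rabs_pos. apply Hnorm_nng.
  intros N. rewrite !zps_fs. transitivity (fs (fun k => a * a * Hs_wt t x k) (- Z.of_nat N)%Z (S (2 * N))).
  right. apply fs_ext. intros; apply hw_scal.
  rewrite fs_scal. pose proof (fs_le_Hnorm t x (- Z.of_nat N)%Z (S (2 * N)) Hx).
  replace (Rabs a * Hnorm t x * (Rabs a * Hnorm t x)) with ((Rabs a * Rabs a) * Hnorm t x ^ 2) by ring.
  rewrite <- Rabs_mult, Rabs_pos_eq by nra. apply Rmult_le_compat_l; nra.
Qed.

Lemma inH_zero t : in_H t (fun _ => RtoC 0) /\ Hnorm t (fun _ => RtoC 0) <= 0.
Proof.
  apply Zb_inH. lra. intros N. rewrite zps_fs. transitivity (fs (fun _ => 0) (- Z.of_nat N)%Z (S (2 * N))).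
  right. apply fs_ext. intros. rewrite hw_eq, Cmod_0. ring.
  assert (E : fs (fun _ => 0) (- Z.of_nat N)%Z (S (2 * N)) = 0) by apply (fsg_zero (G := R_AbelianGroup)).
  rewrite E. lra.
Qed.

Lemma ln_gap x : 0 < x -> / (x + 1) <= ln (x + 1) - ln x.
Proof.
  intros Hx. pose proof (exp_ineq1_le (ln (x / (x + 1)))) as H.
  rewrite exp_ln in H by (apply Rdiv_lt_0_compat; lra).
  rewrite ln_div in H by lra.
  assert (x / (x + 1) = 1 - / (x + 1)) by (field; lra). lra.
Qed.

Lemma tele_ineq p x : 0 < p -> 1 <= x ->
  p * Rpower (x + 1) (- (p + 1)) <= Rpower x (- p) - Rpower (x + 1) (- p).
Proof.
  intros Hp Hx. unfold Rpower.
  set (L1 := ln x). set (L2 := ln (x + 1)).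
  assert (Hd : / (x + 1) <= L2 - L1) by (apply ln_gap; lra).
  assert (E1 : exp (- p * L1) = exp (- p * L2) * exp (p * (L2 - L1))) by (rewrite <- exp_plus; f_equal; ring).
  assert (E2 : exp (- (p + 1) * L2) = exp (- p * L2) * / (x + 1)).
  { replace (- (p + 1) * L2) with (- p * L2 + - L2) by ring. rewrite exp_plus. f_equal.
    rewrite exp_Ropp. unfold L2. rewrite exp_ln; lra. }
  pose proof (exp_ineq1_le (p * (L2 - L1))).
  pose proof (exp_pos (- p * L2)).
  rewrite E1, E2.
  assert (p * / (x + 1) <= p * (L2 - L1)) by (apply Rmult_le_compat_l; lra).
  nra.
Qed.

Section Zeta.
Variable s : R.
Hypothesis hs : 1 / 2 < s.

Let e := 2 * s.
Let p := 2 * s - 1.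
Let hh (x : R) := Rpower x (- p).
Let cc := Rpower 2 s / p.

Lemma p_pos : 0 < p.
Proof. unfold p. lra. Qed.

Lemma cc_pos : 0 < cc.
Proof. unfold cc. apply Rdiv_lt_0_compat. unfold Rpower; apply exp_pos. apply p_pos. Qed.

Lemma hh_bounds x : 1 <= x -> 0 < hh x <= 1.
Proof.
  intros Hx. unfold hh. split. unfold Rpower; apply exp_pos.
  rewrite <- (Rpower_O x) by lra. apply Rle_Rpower; auto. pose proof p_pos. lra.
Qed.

Lemma gk_bound (k : Z) : om (- s) k <= Rpower 2 s * Rpower (IZR (Z.abs k) + 1) (- e).
Proof.
  unfold om. rewrite !Rpower_Ropp.
  set (y := IZR (Z.abs k) + 1).
  assert (Hy : 1 <= y) by (unfold y; pose proof (IZR_le 0 (Z.abs k) ltac:(lia)); lra).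
  assert (Hyy : y * y <= 2 * (IZR k ^ 2 + 1)).
  { unfold y. rewrite abs_IZR. pose proof (Rabs_pos (IZR k)).
    replace (IZR k ^ 2) with (Rabs (IZR k) * Rabs (IZR k)).
    2: { rewrite <- Rabs_mult. rewrite Rabs_pos_eq. ring. nra. }
    pose proof (pow2_ge_0 (Rabs (IZR k) - 1)). nra. }
  assert (H1 : Rpower (y * y / 2) s <= Rpower (IZR k ^ 2 + 1) s).
  { apply Rle_Rpower_l. lra. split. nra. lra. }
  assert (H2 : Rpower (y * y / 2) s = Rpower y e / Rpower 2 s).
  { unfold Rdiv. rewrite <- (Rpower_mult_distr (y * y)) by (try apply Rinv_0_lt_compat; nra).
    rewrite <- Rpower_mult_distr by lra.
    assert (Ei : Rpower (/ 2) s = / Rpower 2 s).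
    { unfold Rpower. rewrite ln_Rinv by lra. rewrite <- exp_Ropp. f_equal. ring. }
    rewrite Ei. unfold e.
    replace (2 * s) with (s + s) by ring. rewrite Rpower_plus. reflexivity. }
  assert (P1 : 0 < Rpower y e) by (unfold Rpower; apply exp_pos).
  assert (P2 : 0 < Rpower 2 s) by (unfold Rpower; apply exp_pos).
  rewrite H2 in H1.
  assert (P3 : 0 < Rpower y e / Rpower 2 s) by (apply Rdiv_lt_0_compat; auto).
  apply Rle_trans with (/ (Rpower y e / Rpower 2 s)).
  apply Rinv_le_contravar; auto. right. field. split; lra.
Qed.

Lemma gk_step (k : Z) : (1 <= Z.abs k)%Z ->
  om (- s) k <= cc * (hh (IZR (Z.abs k)) - hh (IZR (Z.abs k) + 1)).
Proof.
  intros Hk. eapply Rle_trans. apply gk_bound.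
  pose proof (tele_ineq p (IZR (Z.abs k)) p_pos (IZR_le 1 _ Hk)) as T.
  replace (- (p + 1)) with (- e) in T by (unfold p, e; ring).
  unfold cc, hh. pose proof p_pos.
  assert (0 < Rpower 2 s) by (unfold Rpower; apply exp_pos).
  apply Rle_trans with (Rpower 2 s / p * (p * Rpower (IZR (Z.abs k) + 1) (- e))).
  right. field. lra.
  apply Rmult_le_compat_l. apply Rlt_le, Rdiv_lt_0_compat; lra. exact T.
Qed.

Definition Phi (k : Z) : R :=
  if Z.leb k 0 then cc * hh (1 - IZR k) else 2 * cc + 1 - cc * hh (IZR k).

Lemma Rpower_1_base x : Rpower 1 x = 1.
Proof. unfold Rpower. rewrite ln_1, Rmult_0_r. apply exp_0. Qed.

Lemma Phi_step (k : Z) : om (- s) k <= Phi (k + 1) - Phi k.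
Proof.
  pose proof cc_pos.
  destruct (Z_lt_le_dec k 0) as [Hk|Hk].
  - unfold Phi. rewrite (proj2 (Z.leb_le k 0)) by lia. rewrite (proj2 (Z.leb_le (k+1) 0)) by lia.
    eapply Rle_trans. apply gk_step; lia.
    rewrite abs_IZR, Rabs_left by (apply IZR_lt; lia).
    rewrite plus_IZR. right. replace (1 - (IZR k + 1)) with (- IZR k) by ring.
    replace (1 - IZR k) with (- IZR k + 1) by ring. ring.
  - destruct (Z.eq_dec k 0) as [E|E].
    + subst. unfold Phi. simpl. unfold om. replace (0 ^ 2 + 1) with 1 by ring.
      rewrite Rpower_1_base. replace (1 - 0) with 1 by ring. unfold hh. rewrite !Rpower_1_base. lra.
    + unfold Phi. rewrite (proj2 (Z.leb_gt k 0)) by lia. rewrite (proj2 (Z.leb_gt (k+1) 0)) by lia.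
      eapply Rle_trans. apply gk_step; lia.
      rewrite Z.abs_eq by lia. rewrite plus_IZR. right. ring.
Qed.

Lemma Phi_bounds k : 0 <= Phi k <= 2 * cc + 1.
Proof.
  pose proof cc_pos. unfold Phi. destruct (Z.leb k 0) eqn:E.
  - apply Z.leb_le in E. assert (1 <= 1 - IZR k) by (pose proof (IZR_le k 0 E); lra).
    pose proof (hh_bounds _ H0).
    assert (cc * hh (1 - IZR k) <= cc * 1) by (apply Rmult_le_compat_l; lra).
    assert (0 <= cc * hh (1 - IZR k)) by (apply Rmult_le_pos; lra). lra.
  - apply Z.leb_gt in E. assert (1 <= IZR k) by (apply IZR_le; lia).
    pose proof (hh_bounds _ H0).
    assert (cc * hh (IZR k) <= cc * 1) by (apply Rmult_le_compat_l; lra).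
    assert (0 <= cc * hh (IZR k)) by (apply Rmult_le_pos; lra). lra.
Qed.

Lemma fs_tele m : forall a, fs (om (- s)) a m <= Phi (a + Z.of_nat m) - Phi a.
Proof.
  induction m as [|m IH]; intros a.
  - rewrite fs_O. replace (a + Z.of_nat 0)%Z with a by lia. lra.
  - rewrite fs_S. specialize (IH (Z.succ a)). pose proof (Phi_step a).
    replace (Z.succ a + Z.of_nat m)%Z with (a + Z.of_nat (S m))%Z in IH by lia.
    replace (Z.succ a) with (a + 1)%Z in * by lia. lra.
Qed.

Definition Zeta0 := 2 * cc + 1.

Lemma Zeta0_window a m : fs (om (- s)) a m <= Zeta0.
Proof.
  eapply Rle_trans. apply fs_tele. pose proof (Phi_bounds (a + Z.of_nat m)). pose proof (Phi_bounds a).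
  unfold Zeta0. lra.
Qed.

Lemma Zeta0_pos : 0 < Zeta0.
Proof. unfold Zeta0. pose proof cc_pos. lra. Qed.

End Zeta.

Lemma om_inv s k : om (- s) k * om s k = 1.
Proof.
  unfold om. rewrite <- Rpower_plus. replace (- s + s) with 0 by ring. apply Rpower_O.
  pose proof (base_pos k); lra.
Qed.

Lemma l1_window s (hs : 1 / 2 < s) w a m : in_H s w ->
  fs (fun k => Cmod (w k)) a m <= sqrt (Zeta0 s) * Hnorm s w.
Proof.
  intros Hw.
  set (P := fs (fun k => Cmod (w k)) a m).
  assert (HP : P * P <= fs (Hs_wt s w) a m * Zeta0 s).
  { unfold P.
    pose proof (fs_CSw (om (- s)) (fun k => om s k * Cmod (w k)) (fun _ => 1) m a) as H.
    assert (E1 : fs (fun k => om (- s) k * (om s k * Cmod (w k)) * 1) a m = fs (fun k => Cmod (w k)) a m).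
    { apply fs_ext. intros k _. transitivity ((om (- s) k * om s k) * Cmod (w k)). ring. rewrite om_inv; ring. }
    assert (E2 : fs (fun k => om (- s) k * (om s k * Cmod (w k)) * (om s k * Cmod (w k))) a m = fs (Hs_wt s w) a m).
    { apply fs_ext. intros k _. rewrite hw_eq. transitivity ((om (- s) k * om s k) * om s k * Cmod (w k) ^ 2). ring.
      rewrite om_inv. ring. }
    assert (E3 : fs (fun k => om (- s) k * 1 * 1) a m = fs (om (- s)) a m).
    { apply fs_ext. intros; ring. }
    cbv beta in H. rewrite E1, E2, E3 in H.
    eapply Rle_trans. apply H. intros k; left; apply om_pos. apply Rmult_le_compat_l. apply fs_nonneg, hw_nng. apply Zeta0_window; auto. }
  assert (P0 : 0 <= P) by (apply fs_nonneg; intros; apply Cmod_ge_0).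
  pose proof (Zeta0_pos s hs).
  assert (P <= sqrt (fs (Hs_wt s w) a m) * sqrt (Zeta0 s)).
  { apply sqrt_prod_bound; auto. apply fs_nonneg, hw_nng. lra. }
  assert (sqrt (fs (Hs_wt s w) a m) <= Hnorm s w).
  { rewrite <- (sqrt_pow2 (Hnorm s w)) by apply Hnorm_nng. apply sqrt_le_1_alt. apply fs_le_Hnorm; auto. }
  pose proof (sqrt_pos (Zeta0 s)). nra.
Qed.

Lemma fs_refl_R (f : Z -> R) c a m : fs (fun k => f (c - k)%Z) a m = fs f (c - a - Z.of_nat m + 1)%Z m.
Proof. apply (fsg_refl (G := R_AbelianGroup)). Qed.

Lemma fs_CS1 (w p : Z -> R) m a : (forall k, 0 <= w k) ->
  fs (fun k => w k * p k) a m * fs (fun k => w k * p k) a m <= fs (fun k => w k * p k * p k) a m * fs w a m.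
Proof.
  intros Hw. pose proof (fs_CSw w p (fun _ => 1) m a Hw) as H. cbv beta in H.
  replace (fs (fun k => w k * p k) a m) with (fs (fun k => w k * p k * 1) a m) by (apply fs_ext; intros; ring).
  replace (fs w a m) with (fs (fun k => w k * 1 * 1) a m) by (apply fs_ext; intros; ring). exact H.
Qed.

Lemma young1 (A b : Z -> R) beta nA nL kA kL : nng A -> nng b ->
  (forall c l, fs b c l <= beta) ->
  fs (fun n => fs (fun k => A k * b (n - k)%Z) kA kL * fs (fun k => A k * b (n - k)%Z) kA kL) nA nL
  <= beta * beta * fs (fun k => A k * A k) kA kL.
Proof.
  intros HA Hb Hbeta.
  assert (Hbeta0 : 0 <= beta) by (eapply Rle_trans; [|apply (Hbeta 0%Z O)]; rewrite fs_O; lra).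
  apply Rle_trans with (fs (fun n => fs (fun k => b (n - k)%Z * A k * A k) kA kL * beta) nA nL).
  - apply fs_le. intros n _.
    pose proof (fs_CS1 (fun k => b (n - k)%Z) A kL kA (fun k => Hb _)) as H. cbv beta in H.
    replace (fs (fun k => A k * b (n - k)%Z) kA kL) with (fs (fun k => b (n - k)%Z * A k) kA kL) by (apply fs_ext; intros; ring).
    eapply Rle_trans. apply H. apply Rmult_le_compat_l. apply fs_nonneg. intros k. apply qxx_nonneg, Hb.
    rewrite fs_refl_R. apply Hbeta.
  -     replace (fs (fun n => fs (fun k => b (n - k)%Z * A k * A k) kA kL * beta) nA nL)
      with (fs (fun n => fs (fun k => b (n - k)%Z * A k * A k * beta) kA kL) nA nL).
    2: { apply fs_ext. intros n _. rewrite Rmult_comm, <- fs_scal. apply fs_ext. intros; ring. }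
    rewrite fs_swap.
    rewrite <- fs_scal. apply fs_le. intros k _.
    replace (fs (fun n => b (n - k)%Z * A k * A k * beta) nA nL) with (A k * A k * beta * fs (fun n => b (n - k)%Z) nA nL).
    2: { rewrite <- fs_scal. apply fs_ext; intros; ring. }
    assert (fs (fun n => b (n - k)%Z) nA nL <= beta).
    { replace (fs (fun n => b (n - k)%Z) nA nL) with (fs (fun n => b (n + - k)%Z) nA nL) by (apply fs_ext; intros; f_equal; lia).
      rewrite (fs_shift b). apply Hbeta. }
    assert (0 <= A k * A k) by (apply Rmult_le_pos; apply HA).
    apply Rle_trans with (A k * A k * beta * beta). apply Rmult_le_compat_l; auto.
    apply Rmult_le_pos; auto. right; ring.
Qed.

Lemma young2 (a B : Z -> R) alpha gamma nA nL kA kL : nng a -> nng B ->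
  fs a kA kL <= alpha -> (forall c l, fs (fun j => B j * B j) c l <= gamma) ->
  fs (fun n => fs (fun k => a k * B (n - k)%Z) kA kL * fs (fun k => a k * B (n - k)%Z) kA kL) nA nL
  <= alpha * alpha * gamma.
Proof.
  intros Ha HB Halpha Hgamma.
  assert (Hg0 : 0 <= gamma) by (eapply Rle_trans; [|apply (Hgamma 0%Z O)]; rewrite fs_O; lra).
  assert (Ha0 : 0 <= fs a kA kL) by (apply fs_nonneg; auto).
  apply Rle_trans with (fs (fun n => fs (fun k => a k * B (n - k)%Z * B (n - k)%Z) kA kL * alpha) nA nL).
  - apply fs_le. intros n _.
    pose proof (fs_CS1 a (fun k => B (n - k)%Z) kL kA Ha) as H. cbv beta in H.
    eapply Rle_trans. apply H. apply Rmult_le_compat_l; auto. apply fs_nonneg. intros k. apply qxx_nonneg, Ha.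
  - replace (fs (fun n => fs (fun k => a k * B (n - k)%Z * B (n - k)%Z) kA kL * alpha) nA nL)
      with (fs (fun n => fs (fun k => a k * B (n - k)%Z * B (n - k)%Z * alpha) kA kL) nA nL).
    2: { apply fs_ext. intros n _. rewrite Rmult_comm, <- fs_scal. apply fs_ext. intros; ring. }
    rewrite fs_swap.
    apply Rle_trans with (fs (fun k => a k * (alpha * gamma)) kA kL).
    + apply fs_le. intros k _.
      replace (fs (fun n => a k * B (n - k)%Z * B (n - k)%Z * alpha) nA nL) with (a k * alpha * fs (fun n => B (n - k)%Z * B (n - k)%Z) nA nL).
      2: { rewrite <- fs_scal. apply fs_ext; intros; ring. }
      assert (fs (fun n => B (n - k)%Z * B (n - k)%Z) nA nL <= gamma).
      { replace (fs (fun n => B (n - k)%Z * B (n - k)%Z) nA nL) with (fs (fun n => (fun j => B j * B j) (n + - k)%Z) nA nL) by (apply fs_ext; intros; cbv beta; f_equal; f_equal; lia).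
        rewrite (fs_shift (fun j => B j * B j)). apply Hgamma. }
      assert (0 <= alpha) by lra. pose proof (Ha k).
      apply Rle_trans with (a k * alpha * gamma). apply Rmult_le_compat_l; auto. apply Rmult_le_pos; auto.
      right; ring.
    + assert (0 <= alpha) by lra.
      replace (fs (fun k => a k * (alpha * gamma)) kA kL) with (alpha * gamma * fs a kA kL) by (rewrite <- fs_scal; apply fs_ext; intros; ring).
      apply Rle_trans with (alpha * gamma * alpha). apply Rmult_le_compat_l; auto. apply Rmult_le_pos; auto. right; ring.
Qed.

Lemma om_sq s k : om (s / 2) k * om (s / 2) k = om s k.
Proof. unfold om. rewrite <- Rpower_plus. f_equal. field. Qed.

Lemma rho_ineq s (hs : 0 <= s) n k : om (s / 2) n <= Rpower 2 s * (om (s / 2) k + om (s / 2) (n - k)%Z).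
Proof.
  assert (H4 : Rpower 4 (s / 2) = Rpower 2 s).
  { replace 4 with (2 * 2) by ring. rewrite <- Rpower_mult_distr by lra. rewrite <- Rpower_plus. f_equal. field. }
  assert (Hsq : forall x y : R, (x + y) ^ 2 <= 2 * x ^ 2 + 2 * y ^ 2).
  { intros x y. pose proof (pow2_ge_0 (x - y)). nra. }
  assert (En : IZR n = IZR k + IZR (n - k)) by (rewrite minus_IZR; ring).
  pose proof (Hsq (IZR k) (IZR (n - k))). rewrite <- En in H.
  pose proof (pow2_ge_0 (IZR k)). pose proof (pow2_ge_0 (IZR (n - k))).
  pose proof (om_pos (s/2) k). pose proof (om_pos (s/2) (n - k)). pose proof (exp_pos (s * ln 2)) as P2.
  change (exp (s * ln 2)) with (Rpower 2 s) in P2.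
  destruct (Rle_dec (IZR k ^ 2) (IZR (n - k) ^ 2)) as [Hle|Hle].
  - assert (om (s / 2) n <= Rpower 2 s * om (s / 2) (n - k)).
    { unfold om. rewrite <- H4, Rpower_mult_distr by lra. apply Rle_Rpower_l. lra. split. pose proof (base_pos n); lra. lra. }
    nra.
  - assert (om (s / 2) n <= Rpower 2 s * om (s / 2) k).
    { unfold om. rewrite <- H4, Rpower_mult_distr by lra. apply Rle_Rpower_l. lra. split. pose proof (base_pos n); lra. lra. }
    nra.
Qed.

Definition Kalg s := 4 * Rpower 2 s * Rpower 2 s * Zeta0 s.

Lemma alg_finite s (hs : 1 / 2 < s) (u v : seqZ) nA nL kA kL : in_H s u -> in_H s v ->
  fs (fun n => om s n * (fs (fun k => Cmod (u k) * Cmod (v (n - k)%Z)) kA kL * fs (fun k => Cmod (u k) * Cmod (v (n - k)%Z)) kA kL)) nA nL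
  <= Kalg s * Hnorm s u ^ 2 * Hnorm s v ^ 2.
Proof.
  intros Hu Hv.
  set (c2 := Rpower 2 s). assert (Hc2 : 0 < c2) by (unfold c2, Rpower; apply exp_pos).
  set (rho := om (s / 2)). set (a := fun k => Cmod (u k)). set (b := fun k => Cmod (v k)).
  set (X := fun n => fs (fun k => (rho k * a k) * b (n - k)%Z) kA kL).
  set (Y := fun n => fs (fun k => a k * (rho (n - k)%Z * b (n - k)%Z)) kA kL).
  assert (Hrho : forall k, 0 < rho k) by (intros; apply om_pos).
  assert (Ha : nng a) by (intros k; apply Cmod_ge_0).
  assert (Hb : nng b) by (intros k; apply Cmod_ge_0).
  apply Rle_trans with (fs (fun n => 2 * (c2 * c2) * (X n * X n + Y n * Y n)) nA nL).
  - apply fs_le. intros n _.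
    set (S := fs (fun k => Cmod (u k) * Cmod (v (n - k)%Z)) kA kL).
    assert (HS0 : 0 <= S) by (apply fs_nonneg; intros; apply Rmult_le_pos; apply Cmod_ge_0).
    assert (HX0 : 0 <= X n) by (apply fs_nonneg; intros; apply Rmult_le_pos; [apply Rmult_le_pos|]; auto; left; auto).
    assert (HY0 : 0 <= Y n) by (apply fs_nonneg; intros; apply Rmult_le_pos; [|apply Rmult_le_pos]; auto; left; auto).
    assert (H1 : rho n * S <= c2 * (X n + Y n)).
    { unfold S. rewrite <- fs_scal. unfold X, Y. rewrite <- fs_plus, <- fs_scal. apply fs_le. intros k _.
      pose proof (rho_ineq s ltac:(lra) n k). fold c2 rho in H.
      pose proof (Ha k). pose proof (Hb (n - k)%Z). unfold a, b in *.
      assert (0 <= Cmod (u k) * Cmod (v (n - k)%Z)) by (apply Rmult_le_pos; auto).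
      apply Rle_trans with (c2 * (rho k + rho (n - k)%Z) * (Cmod (u k) * Cmod (v (n - k)%Z))).
      apply Rmult_le_compat_r; auto. right; ring. }
    rewrite <- (om_sq s n). fold rho.
    assert (0 <= rho n * S) by (apply Rmult_le_pos; auto; left; auto).
    apply Rle_trans with ((c2 * (X n + Y n)) * (c2 * (X n + Y n))).
    { replace (rho n * rho n * (S * S)) with ((rho n * S) * (rho n * S)) by ring.
      apply Rmult_le_compat; auto. }
    pose proof (pow2_ge_0 (X n - Y n)). nra.
  - rewrite fs_scal, fs_plus.
    assert (HY1 : fs (fun n => X n * X n) nA nL <= (sqrt (Zeta0 s) * Hnorm s v) * (sqrt (Zeta0 s) * Hnorm s v) * (Hnorm s u ^ 2)).
    { unfold X. eapply Rle_trans. apply young1.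
      - intros k; apply Rmult_le_pos; auto. left; auto.
      - auto.
      - intros c l. apply (l1_window s hs v c l Hv).
      - apply Rmult_le_compat_l. apply Rmult_le_pos; apply Rmult_le_pos; try apply sqrt_pos; apply Hnorm_nng.
        eapply Rle_trans; [|apply (fs_le_Hnorm s u kA kL Hu)]. right. apply fs_ext. intros k _.
        rewrite hw_eq. unfold a. rewrite <- (om_sq s k). fold rho. ring. }
    assert (HY2 : fs (fun n => Y n * Y n) nA nL <= (sqrt (Zeta0 s) * Hnorm s u) * (sqrt (Zeta0 s) * Hnorm s u) * (Hnorm s v ^ 2)).
    { unfold Y. apply (young2 a (fun j => rho j * b j)).
      - auto.
      - intros k; apply Rmult_le_pos; auto. left; auto.
      - apply (l1_window s hs u kA kL Hu).
      - intros c l. eapply Rle_trans; [|apply (fs_le_Hnorm s v c l Hv)]. right. apply fs_ext. intros k _.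
        rewrite hw_eq. unfold b. rewrite <- (om_sq s k). fold rho. ring. }
    pose proof (Zeta0_pos s hs). 
    assert (E : sqrt (Zeta0 s) * sqrt (Zeta0 s) = Zeta0 s) by (apply sqrt_sqrt; lra).
    unfold Kalg. fold c2.
    apply Rle_trans with (2 * (c2 * c2) * ((sqrt (Zeta0 s) * Hnorm s v) * (sqrt (Zeta0 s) * Hnorm s v) * (Hnorm s u ^ 2) + (sqrt (Zeta0 s) * Hnorm s u) * (sqrt (Zeta0 s) * Hnorm s u) * (Hnorm s v ^ 2))).
    { apply Rmult_le_compat_l. nra. lra. }
    right. replace ((sqrt (Zeta0 s) * Hnorm s v) * (sqrt (Zeta0 s) * Hnorm s v)) with ((sqrt (Zeta0 s) * sqrt (Zeta0 s)) * (Hnorm s v * Hnorm s v)) by ring.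
    replace ((sqrt (Zeta0 s) * Hnorm s u) * (sqrt (Zeta0 s) * Hnorm s u)) with ((sqrt (Zeta0 s) * sqrt (Zeta0 s)) * (Hnorm s u * Hnorm s u)) by ring.
    rewrite E. ring.
Qed.

Lemma is_zsumC_unique f l1 l2 : is_zsumC f l1 -> is_zsumC f l2 -> l1 = l2.
Proof. intros H1 H2. rewrite <- (zsumC_eq f l1 H1). apply zsumC_eq; auto. Qed.

Lemma Cmod_rev (x y : C) : Rabs (Cmod x - Cmod y) <= Cmod (Cminus x y).
Proof.
  assert (E1 : x = Cplus (Cminus x y) y) by (apply injective_projections; simpl; ring).
  assert (E2 : y = Cplus (Copp (Cminus x y)) x) by (apply injective_projections; simpl; ring).
  pose proof (Cmod_triangle (Cminus x y) y). rewrite <- E1 in H.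
  pose proof (Cmod_triangle (Copp (Cminus x y)) x). rewrite <- E2, Cmod_opp in H0.
  apply Rabs_le. lra.
Qed.

Lemma lim_cmod_sq (f : Z -> C) l c : is_zsumC f l ->
  is_lim_seq (fun M => c * (Cmod (zpsum f M) * Cmod (zpsum f M))) (c * (Cmod l * Cmod l)).
Proof.
  intros H.
  assert (H1 : is_lim_seq (fun M => Cmod (zpsum f M)) (Cmod l)).
  { apply is_lim_seq_spec. intros eps. destruct (proj1 (is_zsumC_iff f l) H eps (cond_pos eps)) as [N0 HN0].
    exists N0. intros N HN. eapply Rle_lt_trans. apply Cmod_rev. auto. }
  apply (is_lim_seq_scal_l _ c (Cmod l * Cmod l)).
  apply (is_lim_seq_mult' _ _ (Cmod l) (Cmod l)); auto.
Qed.

Lemma fs_lim (g : Z -> nat -> R) (L : Z -> R) m : forall a,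
  (forall n, is_lim_seq (g n) (L n)) -> is_lim_seq (fun M => fs (fun n => g n M) a m) (fs L a m).
Proof.
  induction m as [|m IH]; intros a H.
  - rewrite fs_O. apply is_lim_seq_ext with (fun _ => 0). intros; rewrite fs_O; auto. apply is_lim_seq_const.
  - rewrite fs_S. apply is_lim_seq_ext with (fun M => g a M + fs (fun n => g n M) (Z.succ a) m).
    intros; rewrite fs_S; auto. apply is_lim_seq_plus'; auto.
Qed.

Section Conv.
Variable s : R.
Hypothesis hs : 1 / 2 < s.

Lemma AMGM t c X Y : 0 <= t -> 1 <= c -> 0 <= X -> 0 <= Y -> t * t <= c * X * Y -> t <= c * (X + Y).
Proof.
  intros Ht Hc HX HY H.
  set (q := c * (X + Y)). assert (Hq : 0 <= q) by (unfold q; nra).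
  assert (H1 : c * X * Y <= q * q).
  { unfold q. assert (0 <= X * Y) by nra. assert (X * Y <= (X + Y) * (X + Y)) by nra.
    assert (c * (X * Y) <= c * c * (X * Y)) by nra. nra. }
  destruct (Rle_dec t q) as [Hle|Hlt]; auto. exfalso.
  apply Rnot_le_lt in Hlt. assert (q * q < t * t) by (apply Rmult_le_0_lt_compat; lra). lra.
Qed.

Lemma conv_dom (u v : seqZ) n k :
  Cmod (conv_at u v n k) <= (Hs_wt s u k + Hs_wt s v (n - k)%Z) / 2.
Proof.
  unfold conv_at. rewrite Cmod_mult.
  pose proof (Cmod_sq_le_hw s u k ltac:(lra)). pose proof (Cmod_sq_le_hw s v (n - k)%Z ltac:(lra)).
  pose proof (pow2_ge_0 (Cmod (u k) - Cmod (v (n - k)%Z))). nra.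
Qed.

Lemma dom_Zb (u v : seqZ) n c : in_H s u -> in_H s v ->
  Zb (fun k => c * (Hs_wt s u k + Hs_wt s v (n - k)%Z)) (c * (Hnorm s u ^ 2 + Hnorm s v ^ 2)) \/ c < 0.
Proof.
  intros Hu Hv. destruct (Rlt_dec c 0) as [Hc|Hc]; [right; auto|left].
  intros N. unfold zps. rewrite (zpsum_fsg (G := R_AbelianGroup)). fold (fs (fun k => c * (Hs_wt s u k + Hs_wt s v (n - k)%Z)) (- Z.of_nat N) (S (2 * N))).
  rewrite fs_scal, fs_plus. apply Rmult_le_compat_l. lra.
  rewrite fs_refl_R. pose proof (fs_le_Hnorm s u (- Z.of_nat N)%Z (S (2 * N)) Hu).
  pose proof (fs_le_Hnorm s v (n - - Z.of_nat N - Z.of_nat (S (2 * N)) + 1)%Z (S (2 * N)) Hv). lra.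
Qed.

Lemma dom_Zb' (u v : seqZ) n c : 0 <= c -> in_H s u -> in_H s v ->
  Zb (fun k => c * (Hs_wt s u k + Hs_wt s v (n - k)%Z)) (c * (Hnorm s u ^ 2 + Hnorm s v ^ 2)).
Proof. intros Hc Hu Hv. destruct (dom_Zb u v n c Hu Hv); auto. lra. Qed.

Lemma conv_is (u v : seqZ) n : in_H s u -> in_H s v -> is_zsumC (conv_at u v n) (conv u v n).
Proof.
  intros Hu Hv.
  destruct (dom_conv (conv_at u v n) _ _ (fun k => Rle_trans _ _ _ (conv_dom u v n k) (Req_le _ _ (Rmult_comm _ _)))
     (dom_Zb' u v n (/ 2) ltac:(lra) Hu Hv)) as [l Hl].
  unfold conv. rewrite (zsumC_eq _ _ Hl). auto.
Qed.

Lemma conv_bound (u v : seqZ) a m : in_H s u -> in_H s v ->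
  fs (fun n => om s n * (Cmod (conv u v n) * Cmod (conv u v n))) a m <= Kalg s * Hnorm s u ^ 2 * Hnorm s v ^ 2.
Proof.
  intros Hu Hv.
  pose proof (fs_lim (fun n M => om s n * (Cmod (zpsum (conv_at u v n) M) * Cmod (zpsum (conv_at u v n) M)))
     (fun n => om s n * (Cmod (conv u v n) * Cmod (conv u v n))) m a
     (fun n => lim_cmod_sq _ _ (om s n) (conv_is u v n Hu Hv))) as HL.
  assert (Rbar_le (fs (fun n => om s n * (Cmod (conv u v n) * Cmod (conv u v n))) a m) (Kalg s * Hnorm s u ^ 2 * Hnorm s v ^ 2)).
  { refine (is_lim_seq_le _ _ _ _ _ HL (is_lim_seq_const _)).
    intros M. cbv beta.
    eapply Rle_trans; [|apply (alg_finite s hs u v a m (- Z.of_nat M)%Z (S (2 * M)) Hu Hv)].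
    apply fs_le. intros n _. apply Rmult_le_compat_l. left; apply om_pos.
    rewrite zpsumC_fs.
    assert (Cmod (fsC (conv_at u v n) (- Z.of_nat M) (S (2 * M))) <= fs (fun k => Cmod (u k) * Cmod (v (n - k)%Z)) (- Z.of_nat M) (S (2 * M))).
    { apply fsC_le. intros k. unfold conv_at. rewrite Cmod_mult. lra. }
    pose proof (Cmod_ge_0 (fsC (conv_at u v n) (- Z.of_nat M) (S (2 * M)))).
    apply Rmult_le_compat; auto. }
  simpl in H. auto.
Qed.

End Conv.

Lemma Cmod_cexpi t : Cmod (cexpi t) = 1.
Proof.
  unfold Cmod, cexpi. cbn [fst snd]. pose proof (sin2_cos2 t). unfold Rsqr in H.
  replace (cos t ^ 2 + sin t ^ 2) with 1 by nra. apply sqrt_1.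
Qed.

Lemma hw_H1 s tau w : Hs_wt s (H1 tau w) = Hs_wt s w.
Proof.
  apply functional_extensionality. intros k. rewrite !hw_eq. unfold H1. rewrite Cmod_mult, Cmod_cexpi. ring.
Qed.

Lemma inH_H1 s tau w : in_H s w -> in_H s (H1 tau w).
Proof. unfold in_H. rewrite hw_H1. auto. Qed.

Lemma Hnorm_H1 s tau w : Hnorm s (H1 tau w) = Hnorm s w.
Proof. unfold Hnorm. rewrite hw_H1. auto. Qed.

Definition G (tau : R) (u v : seqZ) : seqZ := H1 (- tau) (dx (conv (H1 tau u) (H1 tau v))).

Lemma Cmod_G tau u v n : Cmod (G tau u v n) = Rabs (IZR n) * Cmod (conv (H1 tau u) (H1 tau v) n).
Proof.
  assert (Ei : Cmod Ci = 1).
  { unfold Cmod, Ci. cbn [fst snd]. replace (0 ^ 2 + 1 ^ 2) with 1 by ring. apply sqrt_1. }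
  unfold G, H1 at 1, dx. rewrite !Cmod_mult, Cmod_cexpi, Cmod_R, Ei. ring.
Qed.

Lemma om_shift s n : om s n = om (s - 1) n * (IZR n ^ 2 + 1).
Proof.
  unfold om. replace s with ((s - 1) + 1) at 1 by ring. rewrite Rpower_plus, Rpower_1. auto.
  pose proof (base_pos n); lra.
Qed.

Lemma G_bound s (hs : 1 / 2 < s) tau u v : in_H s u -> in_H s v ->
  in_H (s - 1) (G tau u v) /\ Hnorm (s - 1) (G tau u v) <= sqrt (Kalg s) * Hnorm s u * Hnorm s v.
Proof.
  intros Hu Hv.
  assert (HK : 0 <= Kalg s).
  { unfold Kalg. pose proof (Zeta0_pos s hs). pose proof (exp_pos (s * ln 2)). change (exp (s * ln 2)) with (Rpower 2 s) in H0. nra. }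
  apply Zb_inH.
  - apply Rmult_le_pos. apply Rmult_le_pos. apply sqrt_pos. apply Hnorm_nng. apply Hnorm_nng.
  - intros N. rewrite zps_fs.
    replace (sqrt (Kalg s) * Hnorm s u * Hnorm s v * (sqrt (Kalg s) * Hnorm s u * Hnorm s v))
      with ((sqrt (Kalg s) * sqrt (Kalg s)) * Hnorm s (H1 tau u) ^ 2 * Hnorm s (H1 tau v) ^ 2)
      by (rewrite !Hnorm_H1; ring).
    rewrite sqrt_sqrt by auto.
    eapply Rle_trans; [|apply (conv_bound s hs (H1 tau u) (H1 tau v)); apply inH_H1; auto].
    apply fs_le. intros n _. rewrite hw_eq, Cmod_G, (om_shift s n).
    pose proof (om_pos (s - 1) n) as Hq0. pose proof (Cmod_ge_0 (conv (H1 tau u) (H1 tau v) n)) as Hq1.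
    replace ((Rabs (IZR n) * Cmod (conv (H1 tau u) (H1 tau v) n)) ^ 2) with
      ((Rabs (IZR n) * Rabs (IZR n)) * (Cmod (conv (H1 tau u) (H1 tau v) n) * Cmod (conv (H1 tau u) (H1 tau v) n))) by ring.
    rewrite <- Rabs_mult, Rabs_pos_eq by nra.
    assert (Hq2 : 0 <= Cmod (conv (H1 tau u) (H1 tau v) n) * Cmod (conv (H1 tau u) (H1 tau v) n)) by nra.
    assert (Hq3 : IZR n * IZR n <= IZR n ^ 2 + 1) by nra.
    replace (om (s - 1) n * (IZR n * IZR n * (Cmod (conv (H1 tau u) (H1 tau v) n) * Cmod (conv (H1 tau u) (H1 tau v) n))))
      with ((om (s - 1) n * (Cmod (conv (H1 tau u) (H1 tau v) n) * Cmod (conv (H1 tau u) (H1 tau v) n))) * (IZR n * IZR n)) by ring.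
    replace (om (s - 1) n * (IZR n ^ 2 + 1) * (Cmod (conv (H1 tau u) (H1 tau v) n) * Cmod (conv (H1 tau u) (H1 tau v) n)))
      with ((om (s - 1) n * (Cmod (conv (H1 tau u) (H1 tau v) n) * Cmod (conv (H1 tau u) (H1 tau v) n))) * (IZR n ^ 2 + 1)) by ring.
    apply Rmult_le_compat_l; auto. apply Rmult_le_pos; lra.
Qed.

Lemma om_ge_sqrt s (hs : 1 / 2 < s) k : sqrt (IZR k ^ 2 + 1) <= om s k.
Proof.
  unfold om. rewrite <- Rpower_sqrt by (pose proof (base_pos k); lra).
  apply Rle_Rpower. apply base_pos. lra.
Qed.

Lemma conv_dx_dom s (hs : 1 / 2 < s) u n k :
  Cmod (conv_at u (dx u) n k) <= (Rabs (IZR n) + 1) * (Hs_wt s u k + Hs_wt s u (n - k)%Z).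
Proof.
  unfold conv_at, dx. rewrite !Cmod_mult.
  assert (Ei : Cmod Ci = 1).
  { unfold Cmod, Ci. cbn [fst snd]. replace (0 ^ 2 + 1 ^ 2) with 1 by ring. apply sqrt_1. }
  rewrite Ei, Cmod_R.
  set (j := (n - k)%Z).
  set (K := sqrt (IZR k ^ 2 + 1)). set (J := sqrt (IZR j ^ 2 + 1)).
  assert (HK1 : Rabs (IZR k) <= K).
  { unfold K. rewrite <- sqrt_Rsqr_abs. apply sqrt_le_1_alt. unfold Rsqr. nra. }
  assert (HK2 : 1 <= K).
  { unfold K. apply Rle_trans with (sqrt 1). right; symmetry; apply sqrt_1. apply sqrt_le_1_alt. pose proof (pow2_ge_0 (IZR k)). lra. }
  assert (HJ1 : Rabs (IZR j) <= J).
  { unfold J. rewrite <- sqrt_Rsqr_abs. apply sqrt_le_1_alt. unfold Rsqr. nra. }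
  assert (Hj : Rabs (IZR j) <= Rabs (IZR n) + Rabs (IZR k)).
  { unfold j. rewrite minus_IZR. unfold Rminus. eapply Rle_trans. apply Rabs_triang. rewrite Rabs_Ropp. lra. }
  pose proof (Rabs_pos (IZR n)). pose proof (Rabs_pos (IZR j)). pose proof (Rabs_pos (IZR k)).
  assert (HKj : Rabs (IZR j) <= (Rabs (IZR n) + 1) * K) by nra.
  assert (Hjj : Rabs (IZR j) * Rabs (IZR j) <= (Rabs (IZR n) + 1) * K * J).
  { apply Rle_trans with ((Rabs (IZR n) + 1) * K * Rabs (IZR j)). apply Rmult_le_compat_r; auto.
    apply Rmult_le_compat_l; auto. nra. }
  pose proof (om_ge_sqrt s hs k). pose proof (om_ge_sqrt s hs j). fold K J in H2, H3.
  apply AMGM.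
  - repeat apply Rmult_le_pos; try apply Cmod_ge_0; try apply Rabs_pos; lra.
  - lra.
  - apply hw_nng.
  - apply hw_nng.
  - rewrite !hw_eq.
    set (a := Cmod (u k)). set (b := Cmod (u j)).
    assert (0 <= a * a) by nra. assert (0 <= b * b) by nra.
    assert (0 <= K * J) by nra.
    assert (K * J <= om s k * om s j) by (apply Rmult_le_compat; lra).
    assert (Rabs (IZR j) * Rabs (IZR j) <= (Rabs (IZR n) + 1) * (om s k * om s j)).
    { eapply Rle_trans. apply Hjj. rewrite Rmult_assoc. apply Rmult_le_compat_l; lra. }
    replace (a * (1 * Rabs (IZR j) * b) * (a * (1 * Rabs (IZR j) * b))) with ((Rabs (IZR j) * Rabs (IZR j)) * ((a * a) * (b * b))) by ring.
    replace ((Rabs (IZR n) + 1) * (om s k * a ^ 2) * (om s j * b ^ 2)) with (((Rabs (IZR n) + 1) * (om s k * om s j)) * ((a * a) * (b * b))) by ring.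
    apply Rmult_le_compat_r; auto. nra.
Qed.

Lemma sym_ident s (hs : 1 / 2 < s) w tau n : in_H s w ->
  conv (H1 tau w) (dx (H1 tau w)) n =
  Cmult (RtoC (/ 2)) (Cmult (Cmult Ci (RtoC (IZR n))) (conv (H1 tau w) (H1 tau w) n)).
Proof.
  intros Hw. set (u := H1 tau w). assert (Hu : in_H s u) by (apply inH_H1; auto).
  set (f := conv_at u (dx u) n).
  pose proof (conv_dx_dom s hs u n) as Hd.
  pose proof (dom_Zb' s u u n (Rabs (IZR n) + 1) ltac:(pose proof (Rabs_pos (IZR n)); lra) Hu Hu) as HZ.
  destruct (dom_conv f _ _ Hd HZ) as [l Hl].
  assert (E1 : conv u (dx u) n = l) by (apply zsumC_eq; auto).
  pose proof (is_zsumC_refl f _ _ l n Hd HZ Hl) as Hr.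
  pose proof (is_zsumC_plus _ _ _ _ Hl Hr) as Hp.
  pose proof (is_zsumC_scal (Cmult Ci (RtoC (IZR n))) _ _ (conv_is s hs u u n Hu Hu)) as Hq.
  assert (Ef : (fun k => Cplus (f k) (f (n - k)%Z)) = (fun k => Cmult (Cmult Ci (RtoC (IZR n))) (conv_at u u n k))).
  { apply functional_extensionality. intros k. unfold f, conv_at, dx.
    replace (n - (n - k))%Z with k by lia. rewrite minus_IZR.
    apply injective_projections; simpl; ring. }
  cbv beta in Hp. rewrite Ef in Hp. pose proof (is_zsumC_unique _ _ _ Hp Hq) as E2.
  rewrite E1. rewrite <- E2. apply injective_projections; simpl; field.
Qed.

Ltac Cring := apply injective_projections; simpl; ring.

Lemma H1_at t x n : H1 t x n = Cmult (cexpi (- (IZR n ^ 3) * t)) (x n).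
Proof. reflexivity. Qed.

Lemma Htilde_G s (hs : 1 / 2 < s) tau w : in_H s w -> Htilde tau w = sscal (/ 2) (G tau w w).
Proof.
  intros Hw. apply functional_extensionality. intros n.
  unfold Htilde, sscal, G. rewrite !H1_at. rewrite (sym_ident s hs w tau n Hw). unfold dx. Cring.
Qed.

Section Lin.
Variable s : R.
Hypothesis hs : 1 / 2 < s.

Lemma conv_lin_r u x y (a b : C) n : in_H s u -> in_H s x -> in_H s y ->
  conv u (fun k => Cplus (Cmult a (x k)) (Cmult b (y k))) n = Cplus (Cmult a (conv u x n)) (Cmult b (conv u y n)).
Proof.
  intros Hu Hx Hy. apply zsumC_eq.
  pose proof (is_zsumC_plus _ _ _ _ (is_zsumC_scal a _ _ (conv_is s hs u x n Hu Hx)) (is_zsumC_scal b _ _ (conv_is s hs u y n Hu Hy))) as H.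
  replace (conv_at u (fun k => Cplus (Cmult a (x k)) (Cmult b (y k))) n) with
    (fun k => Cplus (Cmult a (conv_at u x n k)) (Cmult b (conv_at u y n k))); auto.
  apply functional_extensionality; intros k; unfold conv_at; Cring.
Qed.

Lemma conv_lin_l u x y (a b : C) n : in_H s u -> in_H s x -> in_H s y ->
  conv (fun k => Cplus (Cmult a (x k)) (Cmult b (y k))) u n = Cplus (Cmult a (conv x u n)) (Cmult b (conv y u n)).
Proof.
  intros Hu Hx Hy. apply zsumC_eq.
  pose proof (is_zsumC_plus _ _ _ _ (is_zsumC_scal a _ _ (conv_is s hs x u n Hx Hu)) (is_zsumC_scal b _ _ (conv_is s hs y u n Hy Hu))) as H.
  replace (conv_at (fun k => Cplus (Cmult a (x k)) (Cmult b (y k))) u n) with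
    (fun k => Cplus (Cmult a (conv_at x u n k)) (Cmult b (conv_at y u n k))); auto.
  apply functional_extensionality; intros k; unfold conv_at; Cring.
Qed.

Lemma H1_comb tau (a b : R) x y : H1 tau (sadd (sscal a x) (sscal b y)) =
  (fun k => Cplus (Cmult (RtoC a) (H1 tau x k)) (Cmult (RtoC b) (H1 tau y k))).
Proof. apply functional_extensionality; intros k. unfold H1, sadd, sscal. Cring. Qed.

Lemma G_lin_r tau u x y (a b : R) : in_H s u -> in_H s x -> in_H s y ->
  G tau u (sadd (sscal a x) (sscal b y)) = sadd (sscal a (G tau u x)) (sscal b (G tau u y)).
Proof.
  intros Hu Hx Hy. apply functional_extensionality; intros n.
  unfold G at 1. rewrite H1_comb. unfold H1 at 1, dx at 1.
  rewrite conv_lin_r by (apply inH_H1; auto).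
  unfold sadd, sscal, G, H1, dx. Cring.
Qed.

Lemma G_lin_l tau u x y (a b : R) : in_H s u -> in_H s x -> in_H s y ->
  G tau (sadd (sscal a x) (sscal b y)) u = sadd (sscal a (G tau x u)) (sscal b (G tau y u)).
Proof.
  intros Hu Hx Hy. apply functional_extensionality; intros n.
  unfold G at 1. rewrite H1_comb. unfold H1 at 1, dx at 1.
  rewrite conv_lin_l by (apply inH_H1; auto).
  unfold sadd, sscal, G, H1, dx. Cring.
Qed.

Lemma sadd_as_comb x y : sadd x y = sadd (sscal 1 x) (sscal 1 y).
Proof. apply functional_extensionality; intros k. unfold sadd, sscal. Cring. Qed.

Lemma G_add_r tau u x y : in_H s u -> in_H s x -> in_H s y ->
  G tau u (sadd x y) = sadd (G tau u x) (G tau u y).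
Proof.
  intros. rewrite sadd_as_comb, G_lin_r by auto. rewrite (sadd_as_comb (G tau u x)). auto.
Qed.

Lemma G_add_l tau u x y : in_H s u -> in_H s x -> in_H s y ->
  G tau (sadd x y) u = sadd (G tau x u) (G tau y u).
Proof.
  intros. rewrite sadd_as_comb, G_lin_l by auto. rewrite (sadd_as_comb (G tau x u)). auto.
Qed.

End Lin.

Definition Dm tau (k : nat) (w : seqZ) (v : nat -> seqZ) : seqZ :=
  match k with
  | O => Htilde tau w
  | 1%nat => sscal (/ 2) (sadd (G tau w (v O)) (G tau (v O) w))
  | 2%nat => sscal (/ 2) (sadd (G tau (v O) (v 1%nat)) (G tau (v 1%nat) (v O)))
  | _ => fun _ => RtoC 0
  end.

Lemma prodR_nng k g : (forall j, 0 <= g j) -> 0 <= prodR k g.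
Proof. intros H. induction k; simpl. lra. apply Rmult_le_pos; auto. Qed.

Section Smooth.
Variable s : R.
Hypothesis hs : 1 / 2 < s.
Let sK := sqrt (Kalg s).

Lemma sK_nng : 0 <= sK.
Proof. apply sqrt_pos. Qed.

Lemma sym_bound tau u v : in_H s u -> in_H s v ->
  in_H (s - 1) (sscal (/ 2) (sadd (G tau u v) (G tau v u))) /\
  Hnorm (s - 1) (sscal (/ 2) (sadd (G tau u v) (G tau v u))) <= sK * Hnorm s u * Hnorm s v.
Proof.
  intros Hu Hv.
  destruct (G_bound s hs tau u v Hu Hv) as [H1 H2].
  destruct (G_bound s hs tau v u Hv Hu) as [H3 H4].
  destruct (inH_add (s - 1) _ _ H1 H3) as [H5 H6].
  destruct (inH_scal (s - 1) (/ 2) _ H5) as [H7 H8].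
  split; auto. rewrite Rabs_pos_eq in H8 by lra. fold sK in H2, H4. lra.
Qed.

Lemma zero_fun_bound f : f = (fun _ => RtoC 0) -> forall B, 0 <= B -> Hnorm (s - 1) f <= B.
Proof. intros E B HB. subst. pose proof (proj2 (inH_zero (s - 1))). lra. Qed.

Lemma inH_sadd w h : in_H s w -> in_H s h -> in_H s (sadd w h).
Proof. intros. apply inH_add; auto. Qed.

Theorem smooth_Htilde tau : smooth_map s (s - 1) (Htilde tau).
Proof.
  exists (Dm tau). split. { intros; reflexivity. }
  intros k w Hw.
  destruct k as [|[|[|k]]].
  -
    split. { intros; reflexivity. }
    split. { intros; lia. }
    split.
    + exists (sK / 2 * Hnorm s w * Hnorm s w). intros v _. simpl.
      rewrite (Htilde_G s hs tau w Hw).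
      destruct (G_bound s hs tau w w Hw Hw) as [H1 H2].
      destruct (inH_scal (s - 1) (/ 2) _ H1) as [H3 H4]. split; auto.
      rewrite Rabs_pos_eq in H4 by lra. fold sK in H2. 
      assert (/ 2 * Hnorm (s - 1) (G tau w w) <= / 2 * (sK * Hnorm s w * Hnorm s w)) by lra. lra.
    + intros eps Heps. pose proof sK_nng.
      exists (eps / (sK + 1)). split. { apply Rdiv_lt_0_compat; lra. }
      intros h Hh Hhd v _. simpl.
      assert (Hwh : in_H s (sadd w h)) by (apply inH_sadd; auto).
      assert (E : ssub (ssub (Htilde tau (sadd w h)) (Htilde tau w)) (sscal (/ 2) (sadd (G tau w h) (G tau h w)))
                  = sscal (/ 2) (G tau h h)).
      { rewrite (Htilde_G s hs tau _ Hwh), (Htilde_G s hs tau _ Hw).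
        rewrite (G_add_l s hs tau (sadd w h) w h) by auto.
        rewrite (G_add_r s hs tau w w h) by auto.
        rewrite (G_add_r s hs tau h w h) by auto.
        apply functional_extensionality; intros n. unfold ssub, sadd, sscal. Cring. }
      rewrite E.
      destruct (G_bound s hs tau h h Hh Hh) as [H1 H2].
      destruct (inH_scal (s - 1) (/ 2) _ H1) as [H3 H4].
      rewrite Rabs_pos_eq in H4 by lra. fold sK in H2.
      pose proof (Hnorm_nng s h).
      assert (Hq : (sK + 1) * Hnorm s h <= eps).
      { apply Rle_trans with ((sK + 1) * (eps / (sK + 1))). apply Rmult_le_compat_l; lra.
        right. field. lra. }
      apply Rle_trans with (/ 2 * (sK * Hnorm s h * Hnorm s h)). lra.
      apply Rle_trans with ((sK + 1) * Hnorm s h * Hnorm s h).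
      { assert (0 <= Hnorm s h * Hnorm s h) by nra. nra. }
      apply Rle_trans with (eps * Hnorm s h). apply Rmult_le_compat_r; auto.
      right. simpl. ring.
  -
    split. { intros v v' H. simpl. rewrite (H O) by lia. auto. }
    split.
    { intros v i a b x y Hi Hv Hx Hy. assert (i = O) by lia. subst i. cbn [Dm upd Nat.eqb].
      assert (Hc : in_H s (sadd (sscal a x) (sscal b y))).
      { apply inH_add; apply inH_scal; auto. }
      rewrite (G_lin_r s hs tau w x y a b) by auto.
      rewrite (G_lin_l s hs tau w x y a b) by auto.
      apply functional_extensionality; intros n. unfold sadd, sscal. Cring. }
    split.
    + exists (sK * Hnorm s w). intros v Hv. simpl.
      destruct (sym_bound tau w (v O) Hw (Hv O ltac:(lia))) as [H1 H2]. split; auto. lra.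
    + intros eps Heps. exists 1. split. lra.
      intros h Hh Hhd v Hv. simpl.
      apply zero_fun_bound.
      * pose proof (Hv O ltac:(lia)) as Hv0.
        rewrite (G_add_l s hs tau (v O) w h) by auto.
        rewrite (G_add_r s hs tau (v O) w h) by auto.
        apply functional_extensionality; intros n. unfold ssub, sadd, sscal. Cring.
      * apply Rmult_le_pos. apply Rmult_le_pos. lra. apply Hnorm_nng. rewrite Rmult_1_l. apply Hnorm_nng.
  -
    split. { intros v v' H. simpl. rewrite (H O) by lia. rewrite (H 1%nat) by lia. auto. }
    split.
    { intros v i a b x y Hi Hv Hx Hy.
      pose proof (Hv O ltac:(lia)) as Hv0. pose proof (Hv 1%nat ltac:(lia)) as Hv1.
      destruct i as [|[|i]]; [| |lia]; cbn [Dm upd Nat.eqb].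
      - rewrite (G_lin_l s hs tau (v 1%nat) x y a b) by auto.
        rewrite (G_lin_r s hs tau (v 1%nat) x y a b) by auto.
        apply functional_extensionality; intros n. unfold sadd, sscal. Cring.
      - rewrite (G_lin_l s hs tau (v O) x y a b) by auto.
        rewrite (G_lin_r s hs tau (v O) x y a b) by auto.
        apply functional_extensionality; intros n. unfold sadd, sscal. Cring. }
    split.
    + exists sK. intros v Hv. simpl.
      destruct (sym_bound tau (v O) (v 1%nat) (Hv O ltac:(lia)) (Hv 1%nat ltac:(lia))) as [H1 H2]. split; auto.
      lra.
    + intros eps Heps. exists 1. split. lra.
      intros h Hh Hhd v Hv. simpl.
      apply zero_fun_bound.
      * apply functional_extensionality; intros n. unfold ssub, sadd, sscal. Cring.
      * apply Rmult_le_pos. apply Rmult_le_pos. lra. apply Hnorm_nng.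
        apply Rmult_le_pos. rewrite Rmult_1_l. apply Hnorm_nng. apply Hnorm_nng.
  -
    split. { intros; reflexivity. }
    split. { intros. apply functional_extensionality; intros n. unfold sadd, sscal. Cring. }
    split.
    + exists 0. intros v _. simpl. split. apply inH_zero. pose proof (proj2 (inH_zero (s - 1))). lra.
    + intros eps Heps. exists 1. split. lra. intros h Hh Hhd v Hv.
      apply zero_fun_bound.
      * apply functional_extensionality; intros n. unfold ssub. cbn [Dm]. Cring.
      * apply Rmult_le_pos. apply Rmult_le_pos. lra. apply Hnorm_nng.
        apply prodR_nng. intros; apply Hnorm_nng.
Qed.

End Smooth.

Lemma cos_Zper x z : cos (x + 2 * IZR z * PI) = cos x.
Proof.
  destruct (Z_le_gt_dec 0 z) as [H|H].
  - rewrite <- (Z2Nat.id z) by lia. rewrite <- INR_IZR_INZ. apply cos_period.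
  - replace z with (- Z.of_nat (Z.to_nat (- z)))%Z by lia. rewrite opp_IZR, <- INR_IZR_INZ.
    set (k := Z.to_nat (- z)). rewrite <- (cos_period (x + 2 * - INR k * PI) k). f_equal. ring.
Qed.

Lemma sin_Zper x z : sin (x + 2 * IZR z * PI) = sin x.
Proof.
  destruct (Z_le_gt_dec 0 z) as [H|H].
  - rewrite <- (Z2Nat.id z) by lia. rewrite <- INR_IZR_INZ. apply sin_period.
  - replace z with (- Z.of_nat (Z.to_nat (- z)))%Z by lia. rewrite opp_IZR, <- INR_IZR_INZ.
    set (k := Z.to_nat (- z)). rewrite <- (sin_period (x + 2 * - INR k * PI) k). f_equal. ring.
Qed.

Lemma is_RInt_eq_val {V : NormedModule R_AbsRing} (f : R -> V) a b l l' : l = l' -> is_RInt f a b l -> is_RInt f a b l'.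
Proof. intros E; subst; auto. Qed.

Lemma RInt_cos_Z z : z <> 0%Z -> is_RInt (fun t => cos (IZR z * t)) 0 (2 * PI) 0.
Proof.
  intros Hz. assert (Hz' : IZR z <> 0) by (apply not_0_IZR; auto).
  apply (is_RInt_eq_val _ _ _ (minus (sin (IZR z * (2 * PI)) / IZR z) (sin (IZR z * 0) / IZR z))).
  { rewrite Rmult_0_r, sin_0. replace (IZR z * (2 * PI)) with (0 + 2 * IZR z * PI) by ring.
    rewrite sin_Zper, sin_0. unfold minus, plus, opp; simpl. field; auto. }
  apply (is_RInt_derive (fun t => sin (IZR z * t) / IZR z)).
  - intros x _. auto_derive; auto. field; auto.
  - intros x _. apply continuous_cos_comp. apply (ex_derive_continuous (K := R_AbsRing) (V := R_NormedModule)). auto_derive; auto.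
Qed.

Lemma RInt_sin_Z z : z <> 0%Z -> is_RInt (fun t => sin (IZR z * t)) 0 (2 * PI) 0.
Proof.
  intros Hz. assert (Hz' : IZR z <> 0) by (apply not_0_IZR; auto).
  apply (is_RInt_eq_val _ _ _ (minus (- cos (IZR z * (2 * PI)) / IZR z) (- cos (IZR z * 0) / IZR z))).
  { rewrite Rmult_0_r, cos_0. replace (IZR z * (2 * PI)) with (0 + 2 * IZR z * PI) by ring.
    rewrite cos_Zper, cos_0. unfold minus, plus, opp; simpl. field; auto. }
  apply (is_RInt_derive (fun t => - cos (IZR z * t) / IZR z)).
  - intros x _. auto_derive; auto. field; auto.
  - intros x _. apply continuous_sin_comp. apply (ex_derive_continuous (K := R_AbsRing) (V := R_NormedModule)). auto_derive; auto.
Qed.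

Lemma RInt_const_C (c : C) :
  is_RInt (V := C_R_NormedModule) (fun t => c) 0 (2 * PI) (Cmult (RtoC (2 * PI)) c).
Proof.
  pose proof (is_RInt_const (V := C_R_NormedModule) 0 (2 * PI) c) as H.
  replace (Cmult (RtoC (2 * PI)) c) with (@scal R_Ring C_R_ModuleSpace (2 * PI - 0) c). exact H.
  destruct c as [c1 c2]. unfold scal; simpl. unfold prod_scal. simpl. unfold scal; simpl. unfold mult; simpl.
  apply injective_projections; simpl; ring.
Qed.
Lemma RInt_cexpi_nz z (c1 c2 : R) : z <> 0%Z ->
  is_RInt (V := C_R_NormedModule) (fun t => Cmult (cexpi (IZR z * t)) (c1, c2)) 0 (2 * PI) (RtoC 0).
Proof.
  intros Ez.
  assert (H1 : is_RInt (fun t => fst (Cmult (cexpi (IZR z * t)) (c1, c2))) 0 (2 * PI) 0).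
  { pose proof (is_RInt_minus _ _ _ _ _ _ (is_RInt_scal _ _ _ c1 _ (RInt_cos_Z z Ez)) (is_RInt_scal _ _ _ c2 _ (RInt_sin_Z z Ez))) as H.
    unfold minus, plus, opp, scal in H; simpl in H. unfold mult in H; simpl in H.
    refine (is_RInt_eq_val _ _ _ (c1 * 0 + - (c2 * 0)) _ _ _). { simpl. ring. }
    apply (is_RInt_ext (fun y : R => c1 * cos (IZR z * y) + - (c2 * sin (IZR z * y)))).
    { intros x _. simpl. ring. }
    exact H. }
  assert (H2 : is_RInt (fun t => snd (Cmult (cexpi (IZR z * t)) (c1, c2))) 0 (2 * PI) 0).
  { pose proof (is_RInt_plus _ _ _ _ _ _ (is_RInt_scal _ _ _ c2 _ (RInt_cos_Z z Ez)) (is_RInt_scal _ _ _ c1 _ (RInt_sin_Z z Ez))) as H.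
    unfold plus, scal in H; simpl in H. unfold mult in H; simpl in H.
    refine (is_RInt_eq_val _ _ _ (c2 * 0 + c1 * 0) _ _ _). { simpl. ring. }
    apply (is_RInt_ext (fun y : R => c2 * cos (IZR z * y) + c1 * sin (IZR z * y))).
    { intros x _. simpl. ring. }
    exact H. }
  exact (is_RInt_fct_extend_pair (U := R_NormedModule) (V := R_NormedModule) _ _ _ _ _ H1 H2).
Qed.

Lemma RInt_cexpi_C z (c : C) :
  is_RInt (V := C_R_NormedModule) (fun t => Cmult (cexpi (IZR z * t)) c) 0 (2 * PI)
    (if Z.eqb z 0 then Cmult (RtoC (2 * PI)) c else RtoC 0).
Proof.
  destruct (Z.eqb z 0) eqn:Ez.
  - apply Z.eqb_eq in Ez. subst.
    apply (is_RInt_ext (fun _ => c)). { intros x _. unfold cexpi. rewrite Rmult_0_l, cos_0, sin_0. Cring. }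
    apply RInt_const_C.
  - apply Z.eqb_neq in Ez. destruct c as [c1 c2]. apply RInt_cexpi_nz; auto.
Qed.

Lemma RInt_Cmult_l (f : R -> C) a b (I : C) (c : C) :
  is_RInt (V := C_R_NormedModule) f a b I ->
  is_RInt (V := C_R_NormedModule) (fun t => Cmult c (f t)) a b (Cmult c I).
Proof.
  intros H.
  pose proof (is_RInt_fct_extend_fst (U := R_NormedModule) (V := R_NormedModule) f a b I H) as H1.
  pose proof (is_RInt_fct_extend_snd (U := R_NormedModule) (V := R_NormedModule) f a b I H) as H2.
  destruct c as [c1 c2].
  apply (is_RInt_fct_extend_pair (U := R_NormedModule) (V := R_NormedModule)).
  - pose proof (is_RInt_minus _ _ _ _ _ _ (is_RInt_scal _ _ _ c1 _ H1) (is_RInt_scal _ _ _ c2 _ H2)) as H3.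
    unfold minus, plus, opp, scal in H3; simpl in H3. unfold mult in H3; simpl in H3.
    refine (is_RInt_eq_val _ _ _ _ _ _ (is_RInt_ext _ _ _ _ _ _ H3)).
    { simpl. ring. }
    { intros x _. simpl. ring. }
  - pose proof (is_RInt_plus _ _ _ _ _ _ (is_RInt_scal _ _ _ c1 _ H2) (is_RInt_scal _ _ _ c2 _ H1)) as H3.
    unfold plus, scal in H3; simpl in H3. unfold mult in H3; simpl in H3.
    refine (is_RInt_eq_val _ _ _ _ _ _ (is_RInt_ext _ _ _ _ _ _ H3)).
    { simpl. ring. }
    { intros x _. simpl. ring. }
Qed.

Lemma RInt_Cplus (f g : R -> C) a b (I J : C) :
  is_RInt (V := C_R_NormedModule) f a b I -> is_RInt (V := C_R_NormedModule) g a b J ->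
  is_RInt (V := C_R_NormedModule) (fun t => Cplus (f t) (g t)) a b (Cplus I J).
Proof.
  intros H1 H2. exact (is_RInt_plus (V := C_R_NormedModule) _ _ _ _ _ _ H1 H2).
Qed.

Lemma RInt_fsC (F : Z -> R -> C) (I : Z -> C) m : forall a,
  (forall k, is_RInt (V := C_R_NormedModule) (F k) 0 (2 * PI) (I k)) ->
  is_RInt (V := C_R_NormedModule) (fun t => fsC (fun k => F k t) a m) 0 (2 * PI) (fsC I a m).
Proof.
  induction m as [|m IH]; intros a H.
  - refine (is_RInt_eq_val _ _ _ _ _ _ (is_RInt_ext _ (fun t => fsC (fun k => F k t) a 0) _ _ _ _ (RInt_const_C (RtoC 0)))).
    { unfold fsC; simpl. Cring. }
    { intros x _. unfold fsC; simpl. Cring. }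
  - apply (is_RInt_ext (fun t => Cplus (F a t) (fsC (fun k => F k t) (Z.succ a) m))).
    { intros x _. reflexivity. }
    rewrite fsC_S. apply RInt_Cplus; auto.
Qed.

Lemma fsC_zero (f : Z -> C) a m : (forall k, (a <= k < a + Z.of_nat m)%Z -> f k = RtoC 0) -> fsC f a m = RtoC 0.
Proof.
  intros H. unfold fsC. rewrite (fsg_ext f (fun _ => @zero C_AbelianGroup)).
  rewrite fsg_zero. reflexivity. intros k Hk. rewrite H; auto.
Qed.

Lemma fsC_delta (p : Z) (v : C) m : forall a, (a <= p < a + Z.of_nat m)%Z ->
  fsC (fun k => if Z.eqb k p then v else RtoC 0) a m = v.
Proof.
  induction m as [|m IH]; intros a H. lia.
  rewrite fsC_S. destruct (Z.eq_dec a p) as [E|E].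
  - subst. rewrite Z.eqb_refl. rewrite fsC_zero. Cring.
    intros k Hk. rewrite (proj2 (Z.eqb_neq k p)) by lia. auto.
  - rewrite (proj2 (Z.eqb_neq a p)) by auto. rewrite IH by lia. Cring.
Qed.

Lemma fsC_plus (f g : Z -> C) a m : fsC (fun k => Cplus (f k) (g k)) a m = Cplus (fsC f a m) (fsC g a m).
Proof. apply (fsg_plus (G := C_AbelianGroup)). Qed.

Lemma fsC_ext (f g : Z -> C) a m : (forall k, f k = g k) -> fsC f a m = fsC g a m.
Proof. intros H. unfold fsC. apply fsg_ext. auto. Qed.

Lemma fsC_two (f : Z -> C) p q a m : p <> q -> (forall k, k <> p -> k <> q -> f k = RtoC 0) ->
  (a <= p < a + Z.of_nat m)%Z -> (a <= q < a + Z.of_nat m)%Z -> fsC f a m = Cplus (f p) (f q).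
Proof.
  intros Hpq Hf Hp Hq.
  rewrite (fsC_ext f (fun k => Cplus (if Z.eqb k p then f p else RtoC 0) (if Z.eqb k q then f q else RtoC 0))).
  - rewrite fsC_plus, !fsC_delta; auto.
  - intros k. destruct (Z.eq_dec k p) as [E|E].
    + subst. rewrite Z.eqb_refl. rewrite (proj2 (Z.eqb_neq p q)) by auto. Cring.
    + destruct (Z.eq_dec k q) as [E'|E'].
      * subst. rewrite Z.eqb_refl. rewrite (proj2 (Z.eqb_neq q p)) by auto. Cring.
      * rewrite (proj2 (Z.eqb_neq k p)), (proj2 (Z.eqb_neq k q)) by auto. rewrite Hf by auto. Cring.
Qed.

Lemma fsC_Cmult (c : C) (f : Z -> C) m : forall a, Cmult c (fsC f a m) = fsC (fun k => Cmult c (f k)) a m.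
Proof.
  induction m as [|m IH]; intros a.
  - unfold fsC; simpl. Cring.
  - rewrite !fsC_S, <- IH. Cring.
Qed.

Lemma cexpi_mult a b : Cmult (cexpi a) (cexpi b) = cexpi (a + b).
Proof. unfold cexpi. rewrite cos_plus, sin_plus. Cring. Qed.

Lemma S_zero (w : seqZ) : is_zsumC (fun m => Cmult (Cmult (Cmult Ci (RtoC (IZR m))) (w m)) (w (- m)%Z)) (RtoC 0).
Proof.
  set (f := fun m => Cmult (Cmult (Cmult Ci (RtoC (IZR m))) (w m)) (w (- m)%Z)).
  assert (Hz : forall N, zpsum f N = RtoC 0).
  { intros N. rewrite zpsumC_fs. set (X := fsC f (- Z.of_nat N) (S (2 * N))).
    assert (E : X = Copp X).
    { unfold X, fsC. rewrite <- (fsg_opp (G := C_AbelianGroup)).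
      transitivity (@fsg C_AbelianGroup (fun k => f (0 - k)%Z) (- Z.of_nat N) (S (2 * N))).
      - rewrite fsg_refl. f_equal. lia.
      - apply fsg_ext. intros k _. unfold f. replace (0 - k)%Z with (- k)%Z by lia. rewrite Z.opp_involutive.
        rewrite opp_IZR. change (@opp C_AbelianGroup) with Copp. Cring. }
    destruct X as [x1 x2]. unfold Copp in E. simpl in E. injection E; intros. apply injective_projections; simpl; lra. }
  apply is_zsumC_iff. intros eps Heps. exists O. intros N _. rewrite Hz.
  replace (Cminus (RtoC 0) (RtoC 0)) with (RtoC 0) by Cring. rewrite Cmod_0. auto.
Qed.

Lemma phase_term A B C0 x y :
  Cmult (cexpi A) (Cmult (Cmult (cexpi B) x) (Cmult (cexpi C0) y)) = Cmult (cexpi (A + B + C0)) (Cmult x y).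
Proof. rewrite <- !cexpi_mult. Cring. Qed.

Lemma Cmod_half : Cmod (RtoC (/ 2)) = / 2.
Proof. rewrite Cmod_R. apply Rabs_pos_eq. lra. Qed.

Lemma Cmod_Cin n : Cmod (Cmult Ci (RtoC (IZR n))) = Rabs (IZR n).
Proof.
  rewrite Cmod_mult, Cmod_R.
  assert (Ei : Cmod Ci = 1).
  { unfold Cmod, Ci. cbn [fst snd]. replace (0 ^ 2 + 1 ^ 2) with 1 by ring. apply sqrt_1. }
  rewrite Ei. ring.
Qed.

Section Avg.
Variable s : R.
Hypothesis hs : 1 / 2 < s.
Variable w : seqZ.
Hypothesis Hw : in_H s w.
Variable n : Z.

Let K := Cmult (RtoC (/ 2)) (Cmult Ci (RtoC (IZR n))).
Let c := fun k => Cmult (w k) (w (n - k)%Z).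
Let z := fun k => (3 * n * k * (n - k))%Z.
Let fM := fun (M : nat) (tau : R) => Cmult K (fsC (fun k => Cmult (cexpi (IZR (z k) * tau)) (c k)) (- Z.of_nat M) (S (2 * M))).
Let hM := fun (M : nat) => Cmult K (fsC (fun k => if Z.eqb (z k) 0 then Cmult (RtoC (2 * PI)) (c k) else RtoC 0) (- Z.of_nat M) (S (2 * M))).
Let g := fun tau => Htilde tau w n.

Lemma g_eq tau : g tau = Cmult (RtoC (/ 2)) (Cmult (cexpi (- (IZR n ^ 3) * - tau)) (Cmult (Cmult Ci (RtoC (IZR n))) (conv (H1 tau w) (H1 tau w) n))).
Proof. unfold g. rewrite (Htilde_G s hs tau w Hw). reflexivity. Qed.

Lemma fM_eq M tau : fM M tau = Cmult (RtoC (/ 2)) (Cmult (cexpi (- (IZR n ^ 3) * - tau)) (Cmult (Cmult Ci (RtoC (IZR n))) (zpsum (conv_at (H1 tau w) (H1 tau w) n) M))).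
Proof.
  unfold fM. rewrite zpsumC_fs.
  transitivity (Cmult K (Cmult (cexpi (- (IZR n ^ 3) * - tau)) (fsC (conv_at (H1 tau w) (H1 tau w) n) (- Z.of_nat M) (S (2 * M))))).
  2: { unfold K. Cring. }
  f_equal. rewrite fsC_Cmult. apply fsC_ext. intros k.
  unfold conv_at, H1. rewrite phase_term. unfold c. f_equal. f_equal.
  unfold z. rewrite !mult_IZR, minus_IZR. ring.
Qed.

Lemma dom_avg tau k : Cmod (conv_at (H1 tau w) (H1 tau w) n k) <= / 2 * (Hs_wt s w k + Hs_wt s w (n - k)%Z).
Proof.
  pose proof (conv_dom s hs (H1 tau w) (H1 tau w) n k) as H. rewrite hw_H1 in H. lra.
Qed.

Let d := fun k => / 2 * (Hs_wt s w k + Hs_wt s w (n - k)%Z).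

Lemma d_Zb : Zb d (/ 2 * (Hnorm s w ^ 2 + Hnorm s w ^ 2)).
Proof. apply (dom_Zb' s w w n (/ 2)); auto. lra. Qed.

Lemma d_nng : nng d.
Proof. intros k. unfold d. pose proof (hw_nng s w k). pose proof (hw_nng s w (n - k)%Z). lra. Qed.

Lemma unif_conv : filterlim fM eventually (locally (T := fct_UniformSpace R C_R_CompleteNormedModule) g).
Proof.
  intros P [eps HP].
  assert (Hn : 0 < / 2 * Rabs (IZR n) + 1) by (pose proof (Rabs_pos (IZR n)); lra).
  destruct (zlim_tail d _ d_nng d_Zb (eps / (/ 2 * Rabs (IZR n) + 1))) as [M0 HM0].
  { apply Rdiv_lt_0_compat; auto. apply cond_pos. }
  exists M0. intros M HM. apply HP. intros tau.
  apply Cmod_ball_C.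
  rewrite fM_eq, g_eq.
  set (ph := cexpi (- (IZR n ^ 3) * - tau)).
  set (P1 := zpsum (conv_at (H1 tau w) (H1 tau w) n) M).
  set (L := conv (H1 tau w) (H1 tau w) n).
  replace (Cminus (Cmult (RtoC (/ 2)) (Cmult ph (Cmult (Cmult Ci (RtoC (IZR n))) P1)))
                  (Cmult (RtoC (/ 2)) (Cmult ph (Cmult (Cmult Ci (RtoC (IZR n))) L))))
    with (Cmult (RtoC (/ 2)) (Cmult ph (Cmult (Cmult Ci (RtoC (IZR n))) (Copp (Cminus L P1))))) by Cring.
  assert (Ei : Cmod Ci = 1).
  { unfold Cmod, Ci. cbn [fst snd]. replace (0 ^ 2 + 1 ^ 2) with 1 by ring. apply sqrt_1. }
  rewrite !Cmod_mult, Cmod_half, Ei, Cmod_R, Cmod_opp. unfold ph. rewrite Cmod_cexpi.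
  pose proof (dom_tail _ d _ L (dom_avg tau) d_Zb (conv_is s hs _ _ n (inH_H1 s tau w Hw) (inH_H1 s tau w Hw)) M) as T.
  fold P1 in T. specialize (HM0 M HM).
  pose proof (Rabs_pos (IZR n)).
  assert (HT : Cmod (Cminus L P1) < eps / (/ 2 * Rabs (IZR n) + 1)) by lra.
  pose proof (Cmod_ge_0 (Cminus L P1)).
  apply Rle_lt_trans with ((/ 2 * Rabs (IZR n) + 1) * Cmod (Cminus L P1)).
  { nra. }
  apply Rmult_lt_reg_r with (/ (/ 2 * Rabs (IZR n) + 1)). apply Rinv_0_lt_compat; auto.
  replace ((/ 2 * Rabs (IZR n) + 1) * Cmod (Cminus L P1) * / (/ 2 * Rabs (IZR n) + 1)) with (Cmod (Cminus L P1)) by (field; lra).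
  exact HT.
Qed.

Lemma fM_RInt M : is_RInt (V := C_R_NormedModule) (fM M) 0 (2 * PI) (hM M).
Proof.
  unfold fM, hM.
  apply (RInt_Cmult_l (fun t => fsC (fun k => Cmult (cexpi (IZR (z k) * t)) (c k)) (- Z.of_nat M) (S (2 * M)))).
  apply (RInt_fsC (fun k t => Cmult (cexpi (IZR (z k) * t)) (c k))).
  intros k. apply RInt_cexpi_C.
Qed.

Lemma hM_const M : n <> 0%Z -> (Z.to_nat (Z.abs n) <= M)%nat ->
  hM M = Cmult K (Cplus (Cmult (RtoC (2 * PI)) (c 0%Z)) (Cmult (RtoC (2 * PI)) (c n))).
Proof.
  intros Hn HM. unfold hM. f_equal.
  rewrite (fsC_two _ 0%Z n).
  - replace (z 0%Z) with 0%Z by (unfold z; ring). replace (z n) with 0%Z by (unfold z; ring). reflexivity.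
  - auto.
  - intros k H1 H2. rewrite (proj2 (Z.eqb_neq (z k) 0)). reflexivity.
    unfold z. intros E. apply Z.mul_eq_0 in E. destruct E as [E|E]; [|lia].
    apply Z.mul_eq_0 in E. destruct E as [E|E]; [|lia]. lia.
  - lia.
  - lia.
Qed.

Lemma avg_nz : n <> 0%Z ->
  ex_RInt (V := C_R_NormedModule) (fun tau => Htilde tau w n) 0 (2 * PI) /\
  Cmult (RtoC (/ (2 * PI))) (RInt (V := C_R_CompleteNormedModule) (fun tau => Htilde tau w n) 0 (2 * PI))
  = Cmult (w 0%Z) (Cmult (Cmult Ci (RtoC (IZR n))) (w n)).
Proof.
  intros Hn.
  destruct (filterlim_RInt (V := C_R_CompleteNormedModule) fM 0 (2 * PI) eventually _ g hM fM_RInt unif_conv) as [If [HIf1 HIf2]].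
  set (V0 := Cmult K (Cplus (Cmult (RtoC (2 * PI)) (c 0%Z)) (Cmult (RtoC (2 * PI)) (c n)))).
  assert (EIf : If = V0).
  { apply (filterlim_locally_unique (K := R_AbsRing) (V := C_R_NormedModule) (F := eventually) hM); auto.
    intros P [eps HP]. exists (Z.to_nat (Z.abs n)). intros M HM. rewrite hM_const; auto. apply HP. apply ball_center. }
  subst If.
  split. { exists V0. exact HIf2. }
  rewrite (is_RInt_unique (V := C_R_CompleteNormedModule) (fun tau => Htilde tau w n) 0 (2 * PI) V0 HIf2).
  unfold V0, K, c. replace (n - 0)%Z with n by lia. replace (n - n)%Z with 0%Z by lia.
  pose proof PI_RGT_0.
  apply injective_projections; simpl; field; lra.
Qed.

End Avg.

Lemma cexpi_Zper x z : cexpi (x + 2 * IZR z * PI) = cexpi x.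
Proof. unfold cexpi. rewrite cos_Zper, sin_Zper. auto. Qed.

Lemma H1_per t x : H1 (t + 2 * PI) x = H1 t x.
Proof.
  apply functional_extensionality; intros n. unfold H1. f_equal.
  replace (- IZR n ^ 3 * (t + 2 * PI)) with (- IZR n ^ 3 * t + 2 * IZR (- (n * n * n)) * PI).
  apply cexpi_Zper. rewrite opp_IZR, !mult_IZR. ring.
Qed.

Lemma H1_per' t x : H1 (- (t + 2 * PI)) x = H1 (- t) x.
Proof.
  apply functional_extensionality; intros n. unfold H1. f_equal.
  replace (- IZR n ^ 3 * - (t + 2 * PI)) with (- IZR n ^ 3 * - t + 2 * IZR (n * n * n) * PI).
  apply cexpi_Zper. rewrite !mult_IZR. ring.
Qed.

Theorem lemma2p7 (s : R) (hs : 1 / 2 < s) :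
  exists Cs : R,
    (* well defined, H^s -> H^{s-1}, with tau-independent bound *)
    (forall (tau : R) (w : seqZ), in_H s w ->
       (forall n : Z, exists l : C,
          is_zsumC (conv_at (H1 tau w) (dx (H1 tau w)) n) l) /\
       in_H (s - 1) (Htilde tau w) /\
       Hnorm (s - 1) (Htilde tau w) <= Cs * Hnorm s w ^ 2) /\
    (* smooth *)
    (forall tau : R, smooth_map s (s - 1) (Htilde tau)) /\
    (* 2pi-periodic in tau *)
    (forall (tau : R) (w : seqZ), in_H s w ->
       Htilde (tau + 2 * PI) w = Htilde tau w) /\
    (* time average *)
    (forall w : seqZ, in_H s w ->
       exists S : C,
         is_zsumC (fun m => Cmult (Cmult (Cmult Ci (RtoC (IZR m))) (w m)) (w (- m)%Z)) S /\
         forall n : Z,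
           ex_RInt (V := C_R_NormedModule) (fun tau => Htilde tau w n) 0 (2 * PI) /\
           Cmult (RtoC (/ (2 * PI))) (RInt (V := C_R_CompleteNormedModule) (fun tau => Htilde tau w n) 0 (2 * PI))
           = Cplus (Cmult (w 0%Z) (Cmult (Cmult Ci (RtoC (IZR n))) (w n)))
                   (if Z.eqb n 0 then S else RtoC 0)).
Proof.
  exists (sqrt (Kalg s) / 2).
  split; [|split; [|split]].
  - intros tau w Hw. split; [|split].
    + intros n. apply (dom_conv _ _ _ (conv_dx_dom s hs (H1 tau w) n)
        (dom_Zb' s (H1 tau w) (H1 tau w) n (Rabs (IZR n) + 1) ltac:(pose proof (Rabs_pos (IZR n)); lra)
           (inH_H1 s tau w Hw) (inH_H1 s tau w Hw))).
    + rewrite (Htilde_G s hs tau w Hw). apply inH_scal. apply (G_bound s hs tau w w Hw Hw).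
    + rewrite (Htilde_G s hs tau w Hw).
      destruct (G_bound s hs tau w w Hw Hw) as [H1' H2'].
      destruct (inH_scal (s - 1) (/ 2) _ H1') as [H3 H4].
      rewrite Rabs_pos_eq in H4 by lra. 
      apply Rle_trans with (/ 2 * (sqrt (Kalg s) * Hnorm s w * Hnorm s w)). lra.
      right. field.
  - intros tau. apply smooth_Htilde; auto.
  - intros tau w _. unfold Htilde. rewrite H1_per, H1_per'. auto.
  - intros w Hw. exists (RtoC 0). split. apply S_zero.
    intros n. destruct (Z.eq_dec n 0) as [E|E].
    + subst n.
      assert (Hz : forall tau, Htilde tau w 0%Z = RtoC 0).
      { intros tau. rewrite (Htilde_G s hs tau w Hw). unfold sscal, G, H1, dx. Cring. }
      assert (HI : is_RInt (V := C_R_NormedModule) (fun tau => Htilde tau w 0%Z) 0 (2 * PI) (RtoC 0)).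
      { apply (is_RInt_ext (fun _ => RtoC 0)). { intros; rewrite Hz; auto. }
        refine (is_RInt_eq_val _ _ _ _ _ _ (RInt_const_C (RtoC 0))). Cring. }
      split. { exists (RtoC 0). exact HI. }
      rewrite (is_RInt_unique (V := C_R_CompleteNormedModule) _ _ _ _ HI). simpl Z.eqb. Cring.
    + destruct (avg_nz s hs w Hw n E) as [H1' H2']. split; auto.
      rewrite H2'. rewrite (proj2 (Z.eqb_neq n 0)) by auto. Cring.
Qed.
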